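(* Let $\mathbb A$ be an abelian category with enough projective objects. Then the 2-category $\mathbb A^{[1]}_c$ is a 2-abelian $\mathsf{Gpd}$-category (in the sense of M. Dupont). Moreover: (a) the category of discrete objects of $\mathbb A^{[1]}_c$ (objects: discrete objects; morphisms: 2-isomorphism classes of morphisms) is equivalent to $\mathbb A$, via $a\mapsto \mathrm{Coker}(a)$; (b) the category of codiscrete objects of $\mathbb A^{[1]}_c$ (objects: codiscrete objects; morphisms: 2-isomorphism classes of morphisms) is equivalent to $\mathbb A$, via $a\mapsto \mathrm{Ker}(a)$.
   Context: Let $\mathbb A$ be an abelian category. The 2-category $\mathbb A^{[1]}$ has as objects the morphisms $a:A_1\to A_0$ of $\mathbb A$. For objects $a:A_1\to A_0$ and $b:B_1\to B_0$, a morphism $a\to b$ is a pair $(f_0,f_1)$ of morphisms $f_i:A_i\to B_i$ of $\mathbb A$ with $b f_1=f_0 a$; composition is componentwise. A 2-arrow $(f_0,f_1)\Rightarrow(g_0,g_1)$ between morphisms $a\to b$ is a morphism $\alpha:A_0\to B_1$ of $\mathbb A$ with $f_1-g_1=\alpha a$ and $f_0-g_0=b\alpha$; vertical composition is addition of such $\alpha$'s, and whiskering is given by $(h_0,h_1)\circ\alpha=h_1\alpha$ and $\alpha\circ(e_0,e_1)=\alpha e_0$. All 2-arrows are invertible, so each $\mathbf{Hom}(a,b)$ is a groupoid; the zero object is $0\to 0$. $\mathbb A^{[1]}_c$ is the full 2-subcategory of $\mathbb A^{[1]}$ on the objects $a:A_1\to A_0$ with $A_0$ projective in $\mathbb A$.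 In a 2-category $\mathcal C$ with invertible 2-arrows (a $\mathsf{Gpd}$-category) and zero object: a morphism $f:a\to b$ is faithful (resp. fully faithful) if for every object $x$ the functor $f\circ-:\mathbf{Hom}(x,a)\to\mathbf{Hom}(x,b)$ is faithful (resp. full and faithful); it is cofaithful (resp. fully cofaithful) if for every $x$ the functor $-\circ f:\mathbf{Hom}(b,x)\to\mathbf{Hom}(a,x)$ is faithful (resp. full and faithful). An object $a$ is discrete if $a\to 0$ is faithful and codiscrete if $0\to a$ is cofaithful. A 2-kernel of $f:a\to b$ is a triple $(k,u:k\to a,\kappa:fu\Rightarrow 0)$ such that for every $x$ the functor $v\mapsto (uv,\kappa v)$ from $\mathbf{Hom}(x,k)$ to the groupoid of pairs $(w\in\mathbf{Hom}(x,a),\ \phi:fw\Rightarrow 0)$ is an equivalence; a 2-cokernel is defined dually. A pip of $f:a\to b$ is a universal pair $(p,\pi)$ with $\pi:0\Rightarrow 0$ a 2-arrow between zero morphisms $p\to a$ and $f\pi=\mathrm{id}$; a root of a 2-arrow $\alpha:0\Rightarrow0$ between morphisms $a\to b$ is a universal morphism $r:R\to a$ with $\alpha r=\mathrm{id}$; copips and coroots are dual. Following Dupont, a $\mathsf{Gpd}$-category is 2-abelian if it is 2-additive (hom-groupoids are symmetric 2-groups, composition is bilinear, finite biproducts exist), it has all 2-kernels, 2-cokernels, pips, copips, roots and coroots, and it is 2-Puppe-exact: every faithful morphism is the 2-kernel of its 2-cokernel, every cofaithful morphism is the 2-cokernel of its 2-kernel, every fully faithful morphism is the root of its copip, and every fully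 cofaithful morphism is the coroot of its pip. *)

(* Defs.v *)
From HB Require Import structures.
From mathcomp Require Import all_boot all_algebra.
Set Implicit Arguments. Unset Strict Implicit. Unset Printing Implicit Defensive.
Import GRing.Theory.
Local Open Scope ring_scope.

Record PreAdditive := {
  ob :> Type;
  hom : ob -> ob -> zmodType;
  comp : forall a b c, hom b c -> hom a b -> hom a c;
  idm : forall a, hom a a;
  compA : forall a b c d (h : hom c d) (g : hom b c) (f : hom a b),
      comp h (comp g f) = comp (comp h g) f;
  comp1m : forall a b (f : hom a b), comp (idm b) f = f;
  compm1 : forall a b (f : hom a b), comp f (idm a) = f;
  compDl : forall a b c (g g' : hom b c) (f : hom a b),
      comp (g + g') f = comp g f + comp g' f;
  compDr : forall a b c (g : hom b c) (f f' : hom a b),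
      comp g (f + f') = comp g f + comp g f';
  zo : ob;
  zo_init : forall x (f : hom zo x), f = 0;
  zo_term : forall x (f : hom x zo), f = 0 }.

Arguments hom {_}.
Arguments comp {_ a b c}.
Arguments idm {_}.
Arguments zo {_}.

Section Abelian.
Variable A : PreAdditive.

Definition mono (x y : A) (m : hom x y) :=
  forall (t : A) (g h : hom t x), comp m g = comp m h -> g = h.
Definition epi (x y : A) (e : hom x y) :=
  forall (t : A) (g h : hom y t), comp g e = comp h e -> g = h.

Definition is_kernel (x y : A) (f : hom x y) (K : A) (k : hom K x) :=
  comp f k = 0 /\
  forall (t : A) (g : hom t x), comp f g = 0 -> exists! h : hom t K, comp k h = g.
Definition is_cokernel (x y : A) (f : hom x y) (C : A) (c : hom y C) :=
  comp c f = 0 /\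
  forall (t : A) (g : hom y t), comp g f = 0 -> exists! h : hom C t, comp h c = g.

Definition is_biproduct (x y w : A) (p1 : hom w x) (p2 : hom w y)
    (i1 : hom x w) (i2 : hom y w) :=
  [/\ comp p1 i1 = idm x, comp p2 i2 = idm y, comp p1 i2 = 0, comp p2 i1 = 0
    & comp i1 p1 + comp i2 p2 = idm w].

Definition abelian :=
  [/\ (forall x y : A, exists w p1 p2 i1 i2, @is_biproduct x y w p1 p2 i1 i2),
      (forall (x y : A) (f : hom x y), exists K (k : hom K x), is_kernel f k),
      (forall (x y : A) (f : hom x y), exists C (c : hom y C), is_cokernel f c),
      (forall (x y : A) (m : hom x y), mono m ->
          exists (z : A) (g : hom y z), is_kernel g m)
    & (forall (x y : A) (e : hom x y), epi e ->
          exists (z : A) (g : hom z x), is_cokernel g e)].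

Definition projective (P : A) :=
  forall (x y : A) (e : hom x y), epi e ->
  forall g : hom P y, exists h : hom P x, comp e h = g.

Definition enough_projectives :=
  forall x : A, exists (P : A) (e : hom P x), projective P /\ epi e.

Lemma comp0m (x y z : A) (f : hom x y) : comp (0 : hom y z) f = 0.
Proof.
have H : comp (0 : hom y z) f + comp 0 f = comp 0 f + 0.
  by rewrite -compDl !addr0.
exact: addrI H.
Qed.

Lemma compm0 (x y z : A) (g : hom y z) : comp g (0 : hom x y) = 0.
Proof.
have H : comp g (0 : hom x y) + comp g 0 = comp g 0 + 0.
  by rewrite -compDr !addr0.
exact: addrI H.
Qed.

Record arr := Arr { A1 : A; A0 : A; amap : hom A1 A0 }.

Definition inC (a : arr) := projective (A0 a).

Record mor (a b : arr) := Mor {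
  m0 : hom (A0 a) (A0 b);
  m1 : hom (A1 a) (A1 b);
  mcomm : comp (amap b) m1 = comp m0 (amap a) }.

Definition is2cell (a b : arr) (f g : mor a b) (al : hom (A0 a) (A1 b)) :=
  m1 f - m1 g = comp al (amap a) /\ m0 f - m0 g = comp (amap b) al.

Lemma compM_subproof (a b c : arr) (g : mor b c) (f : mor a b) :
  comp (amap c) (comp (m1 g) (m1 f)) = comp (comp (m0 g) (m0 f)) (amap a).
Proof. by rewrite compA mcomm -compA mcomm compA. Qed.

Definition compM (a b c : arr) (g : mor b c) (f : mor a b) : mor a c :=
  Mor (compM_subproof g f).

Lemma idM_subproof (a : arr) : comp (amap a) (idm (A1 a)) = comp (idm (A0 a)) (amap a).
Proof. by rewrite comp1m compm1. Qed.
Definition idM (a : arr) : mor a a := Mor (idM_subproof a).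

Lemma zeroM_subproof (a b : arr) :
  comp (amap b) (0 : hom (A1 a) (A1 b)) = comp (0 : hom (A0 a) (A0 b)) (amap a).
Proof. by rewrite comp0m compm0. Qed.
Definition zeroM (a b : arr) : mor a b := Mor (zeroM_subproof a b).

Definition Z : arr := Arr (0 : hom (@zo A) zo).

Definition faithfulM (a b : arr) (f : mor a b) :=
  forall x, inC x -> forall (v w : mor x a) al be,
    is2cell v w al -> is2cell v w be -> comp (m1 f) al = comp (m1 f) be -> al = be.
Definition fullM (a b : arr) (f : mor a b) :=
  forall x, inC x -> forall (v w : mor x a) ga,
    is2cell (compM f v) (compM f w) ga ->
    exists al, is2cell v w al /\ comp (m1 f) al = ga.
Definition fully_faithfulM (a b : arr) (f : mor a b) := faithfulM f /\ fullM f.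

Definition cofaithfulM (a b : arr) (f : mor a b) :=
  forall x, inC x -> forall (v w : mor b x) al be,
    is2cell v w al -> is2cell v w be -> comp al (m0 f) = comp be (m0 f) -> al = be.
Definition cofullM (a b : arr) (f : mor a b) :=
  forall x, inC x -> forall (v w : mor b x) ga,
    is2cell (compM v f) (compM w f) ga ->
    exists al, is2cell v w al /\ comp al (m0 f) = ga.
Definition fully_cofaithfulM (a b : arr) (f : mor a b) := cofaithfulM f /\ cofullM f.

Definition discrete (a : arr) := faithfulM (zeroM a Z).
Definition codiscrete (a : arr) := cofaithfulM (zeroM Z a).

Definition contractible_hom (a b : arr) :=
  (exists f : mor a b, True) /\ forall f g : mor a b, exists! al, is2cell f g al.

Definition is_2zero (z : arr) :=
  inC z /\ forall x, inC x -> contractible_hom x z /\ contractible_hom z x.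

(* Hom(x,p) -> Hom(x,a) x Hom(x,b) is an equivalence of groupoids *)
Definition is_2product (a b p : arr) (p1 : mor p a) (p2 : mor p b) :=
  forall x, inC x ->
  [/\ (forall (v v' : mor x p) ga ga', is2cell v v' ga -> is2cell v v' ga' ->
         comp (m1 p1) ga = comp (m1 p1) ga' -> comp (m1 p2) ga = comp (m1 p2) ga' ->
         ga = ga'),
      (forall (v v' : mor x p) be1 be2,
         is2cell (compM p1 v) (compM p1 v') be1 ->
         is2cell (compM p2 v) (compM p2 v') be2 ->
         exists ga, [/\ is2cell v v' ga, comp (m1 p1) ga = be1 & comp (m1 p2) ga = be2])
    & (forall (w1 : mor x a) (w2 : mor x b), exists (v : mor x p) be1 be2,
         is2cell (compM p1 v) w1 be1 /\ is2cell (compM p2 v) w2 be2)].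

(* Hom(p,x) -> Hom(a,x) x Hom(b,x) is an equivalence of groupoids *)
Definition is_2coproduct (a b p : arr) (i1 : mor a p) (i2 : mor b p) :=
  forall x, inC x ->
  [/\ (forall (v v' : mor p x) ga ga', is2cell v v' ga -> is2cell v v' ga' ->
         comp ga (m0 i1) = comp ga' (m0 i1) -> comp ga (m0 i2) = comp ga' (m0 i2) ->
         ga = ga'),
      (forall (v v' : mor p x) be1 be2,
         is2cell (compM v i1) (compM v' i1) be1 ->
         is2cell (compM v i2) (compM v' i2) be2 ->
         exists ga, [/\ is2cell v v' ga, comp ga (m0 i1) = be1 & comp ga (m0 i2) = be2])
    & (forall (w1 : mor a x) (w2 : mor b x), exists (v : mor p x) be1 be2,
         is2cell (compM v i1) w1 be1 /\ is2cell (compM v i2) w2 be2)].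

Definition is_2biproduct (a b p : arr) (p1 : mor p a) (p2 : mor p b)
    (i1 : mor a p) (i2 : mor b p) :=
  [/\ is_2product p1 p2 /\ is_2coproduct i1 i2,
      (exists al, is2cell (compM p1 i1) (idM a) al),
      (exists al, is2cell (compM p2 i2) (idM b) al),
      (exists al, is2cell (compM p1 i2) (zeroM b a) al)
    & (exists al, is2cell (compM p2 i1) (zeroM a b) al)].

(* hom-groupoids carry the (strict) symmetric 2-group structure given by
   addition of components; composition is strictly bilinear for it.
   What remains of 2-additivity is the existence of finite biproducts. *)
Definition two_additive :=
  is_2zero Z /\
  forall a b, inC a -> inC b ->
    exists p (p1 : mor p a) (p2 : mor p b) (i1 : mor a p) (i2 : mor b p),
      inC p /\ is_2biproduct p1 p2 i1 i2.

Definition is_2kernel (a b : arr) (f : mor a b) (k : arr) (u : mor k a)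
    (ka : hom (A0 k) (A1 b)) :=
  is2cell (compM f u) (zeroM k b) ka /\
  forall x, inC x ->
  [/\ (forall (v v' : mor x k) ga ga', is2cell v v' ga -> is2cell v v' ga' ->
         comp (m1 u) ga = comp (m1 u) ga' -> ga = ga'),
      (forall (v v' : mor x k) be, is2cell (compM u v) (compM u v') be ->
         comp ka (m0 v) = comp (m1 f) be + comp ka (m0 v') ->
         exists ga, is2cell v v' ga /\ comp (m1 u) ga = be)
    & (forall (w : mor x a) ph, is2cell (compM f w) (zeroM x b) ph ->
         exists (v : mor x k) be,
           is2cell (compM u v) w be /\ comp ka (m0 v) = comp (m1 f) be + ph)].

Definition is_2cokernel (a b : arr) (f : mor a b) (c : arr) (q : mor b c)
    (ze : hom (A0 a) (A1 c)) :=
  is2cell (compM q f) (zeroM a c) ze /\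
  forall x, inC x ->
  [/\ (forall (v v' : mor c x) ga ga', is2cell v v' ga -> is2cell v v' ga' ->
         comp ga (m0 q) = comp ga' (m0 q) -> ga = ga'),
      (forall (v v' : mor c x) be, is2cell (compM v q) (compM v' q) be ->
         comp (m1 v) ze = comp be (m0 f) + comp (m1 v') ze ->
         exists ga, is2cell v v' ga /\ comp ga (m0 q) = be)
    & (forall (w : mor b x) ph, is2cell (compM w f) (zeroM a x) ph ->
         exists (v : mor c x) be,
           is2cell (compM v q) w be /\ comp (m1 v) ze = comp be (m0 f) + ph)].

Definition is_pip (a b : arr) (f : mor a b) (p : arr) (pi : hom (A0 p) (A1 a)) :=
  [/\ is2cell (zeroM p a) (zeroM p a) pi, comp (m1 f) pi = 0 &
  forall x, inC x ->
  [/\ (forall (v v' : mor x p) ga ga', is2cell v v' ga -> is2cell v v' ga' -> ga = ga'),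
      (forall (v v' : mor x p), comp pi (m0 v) = comp pi (m0 v') ->
         exists ga, is2cell v v' ga)
    & (forall xi, is2cell (zeroM x a) (zeroM x a) xi -> comp (m1 f) xi = 0 ->
         exists v : mor x p, comp pi (m0 v) = xi)]].

Definition is_copip (a b : arr) (f : mor a b) (c : arr) (ps : hom (A0 b) (A1 c)) :=
  [/\ is2cell (zeroM b c) (zeroM b c) ps, comp ps (m0 f) = 0 &
  forall x, inC x ->
  [/\ (forall (v v' : mor c x) ga ga', is2cell v v' ga -> is2cell v v' ga' -> ga = ga'),
      (forall (v v' : mor c x), comp (m1 v) ps = comp (m1 v') ps ->
         exists ga, is2cell v v' ga)
    & (forall xi, is2cell (zeroM b x) (zeroM b x) xi -> comp xi (m0 f) = 0 ->
         exists v : mor c x, comp (m1 v) ps = xi)]].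

Definition is_root (a b : arr) (al : hom (A0 a) (A1 b)) (R : arr) (r : mor R a) :=
  comp al (m0 r) = 0 /\
  forall x, inC x ->
  [/\ (forall (v v' : mor x R) ga ga', is2cell v v' ga -> is2cell v v' ga' ->
         comp (m1 r) ga = comp (m1 r) ga' -> ga = ga'),
      (forall (v v' : mor x R) be, is2cell (compM r v) (compM r v') be ->
         exists ga, is2cell v v' ga /\ comp (m1 r) ga = be)
    & (forall w : mor x a, comp al (m0 w) = 0 ->
         exists (v : mor x R) be, is2cell (compM r v) w be)].

Definition is_coroot (a b : arr) (al : hom (A0 a) (A1 b)) (C : arr) (c : mor b C) :=
  comp (m1 c) al = 0 /\
  forall x, inC x ->
  [/\ (forall (v v' : mor C x) ga ga', is2cell v v' ga -> is2cell v v' ga' ->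
         comp ga (m0 c) = comp ga' (m0 c) -> ga = ga'),
      (forall (v v' : mor C x) be, is2cell (compM v c) (compM v' c) be ->
         exists ga, is2cell v v' ga /\ comp ga (m0 c) = be)
    & (forall w : mor b x, comp (m1 w) al = 0 ->
         exists (v : mor C x) be, is2cell (compM v c) w be)].

Definition has_2kernels :=
  forall a b (f : mor a b), inC a -> inC b ->
    exists k (u : mor k a) (ka : hom (A0 k) (A1 b)), inC k /\ is_2kernel f u ka.
Definition has_2cokernels :=
  forall a b (f : mor a b), inC a -> inC b ->
    exists c (q : mor b c) (ze : hom (A0 a) (A1 c)), inC c /\ is_2cokernel f q ze.
Definition has_pips :=
  forall a b (f : mor a b), inC a -> inC b ->
    exists p (pi : hom (A0 p) (A1 a)), inC p /\ is_pip f pi.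
Definition has_copips :=
  forall a b (f : mor a b), inC a -> inC b ->
    exists c (ps : hom (A0 b) (A1 c)), inC c /\ is_copip f ps.
Definition has_roots :=
  forall a b al, inC a -> inC b -> is2cell (zeroM a b) (zeroM a b) al ->
    exists R (r : mor R a), inC R /\ is_root al r.
Definition has_coroots :=
  forall a b al, inC a -> inC b -> is2cell (zeroM a b) (zeroM a b) al ->
    exists C (c : mor b C), inC C /\ is_coroot al c.

Definition two_Puppe_exact :=
  [/\ (forall a b (f : mor a b), inC a -> inC b -> faithfulM f ->
         forall c (q : mor b c) ze, inC c -> is_2cokernel f q ze -> is_2kernel q f ze),
      (forall a b (f : mor a b), inC a -> inC b -> cofaithfulM f ->
         forall k (u : mor k a) ka, inC k -> is_2kernel f u ka -> is_2cokernel u f ka),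
      (forall a b (f : mor a b), inC a -> inC b -> fully_faithfulM f ->
         forall c (ps : hom (A0 b) (A1 c)), inC c -> is_copip f ps -> is_root ps f)
    & (forall a b (f : mor a b), inC a -> inC b -> fully_cofaithfulM f ->
         forall p (pi : hom (A0 p) (A1 a)), inC p -> is_pip f pi -> is_coroot pi f)].

Definition two_abelian :=
  [/\ two_additive, has_2kernels /\ has_2cokernels, has_pips /\ has_copips,
      has_roots /\ has_coroots & two_Puppe_exact].

(* The functor sends the class of f : a -> b to the unique h : Coker a -> Coker b
   with h ca = cb f0.  Equivalence = faithful + full + essentially surjective. *)
Definition discrete_coker_equivalence :=
  (forall a b, inC a -> inC b -> discrete a -> discrete b ->
   forall (Ca : A) (ca : hom (A0 a) Ca) (Cb : A) (cb : hom (A0 b) Cb),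
   is_cokernel (amap a) ca -> is_cokernel (amap b) cb ->
   (forall (f g : mor a b) (h : hom Ca Cb),
      comp h ca = comp cb (m0 f) -> comp h ca = comp cb (m0 g) ->
      exists al, is2cell f g al) /\
   (forall h : hom Ca Cb, exists f : mor a b, comp h ca = comp cb (m0 f))) /\
  (forall X : A, exists a, [/\ inC a, discrete a &
      exists c : hom (A0 a) X, is_cokernel (amap a) c]).

Definition codiscrete_ker_equivalence :=
  (forall a b, inC a -> inC b -> codiscrete a -> codiscrete b ->
   forall (Ka : A) (ka : hom Ka (A1 a)) (Kb : A) (kb : hom Kb (A1 b)),
   is_kernel (amap a) ka -> is_kernel (amap b) kb ->
   (forall (f g : mor a b) (h : hom Ka Kb),
      comp kb h = comp (m1 f) ka -> comp kb h = comp (m1 g) ka ->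
      exists al, is2cell f g al) /\
   (forall h : hom Ka Kb, exists f : mor a b, comp kb h = comp (m1 f) ka)) /\
  (forall X : A, exists a, [/\ inC a, codiscrete a &
      exists k : hom X (A1 a), is_kernel (amap a) k]).

End Abelian.

(* Main.v *)
Require Import Defs.
From mathcomp Require Import all_boot all_algebra.
Set Implicit Arguments. Unset Strict Implicit. Unset Printing Implicit Defensive.
Import GRing.Theory.
Local Open Scope ring_scope.
Local Notation hom := Defs.hom.
Local Notation comp := Defs.comp.
Local Notation compA := Defs.compA.
Local Notation compDl := Defs.compDl.
Local Notation compDr := Defs.compDr.
Local Notation comp1m := Defs.comp1m.
Local Notation compm1 := Defs.compm1.

Module ZS.
Inductive zexp := Atom of nat | Zero | Add of zexp & zexp | Opp of zexp.

Section Z.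
Variable V : zmodType.
Fixpoint eval (env : seq V) (e : zexp) : V :=
  match e with
  | Atom n => nth 0 env n
  | Zero => 0
  | Add a b => eval env a + eval env b
  | Opp a => - eval env a
  end.
Fixpoint norm (e : zexp) (i : nat) : int :=
  match e with
  | Atom n => if (i == n)%N then 1 else 0
  | Zero => 0
  | Add a b => norm a i + norm b i
  | Opp a => - norm a i
  end.
Definition sem (env : seq V) (c : nat -> int) : V :=
  \sum_(i < size env) env`_i *~ c i.

Lemma evalE env e : eval env e = sem env (norm e).
Proof.
rewrite /sem; elim: e => [n||a IHa b IHb|a IHa] /=.
- case: (ltnP n (size env)) => [lt|le].
    rewrite (bigD1 (Ordinal lt)) //= eqxx mulr1z big1 ?addr0 // => i /eqP ne.
    by case: ifP => // /eqP E; case: ne; apply: val_inj.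
  rewrite nth_default // big1 // => i _; case: ifP => // /eqP E.
  by move: (ltn_ord i); rewrite E ltnNge le.
- by rewrite big1 // => i _; rewrite mulr0z.
- by rewrite IHa IHb -big_split /=; apply: eq_bigr => i _; rewrite mulrzDr.
- by rewrite IHa -sumrN; apply: eq_bigr => i _; rewrite mulrNz.
Qed.

Lemma sound env e1 e2 n : (size env <= n)%N ->
  all (fun i => norm e1 i == norm e2 i) (iota 0 n) -> eval env e1 = eval env e2.
Proof.
move=> le /allP H; rewrite !evalE /sem; apply: eq_bigr => i _.
have /eqP -> // : norm e1 i == norm e2 i.
by apply: H; rewrite mem_iota add0n (leq_trans (ltn_ord i)).
Qed.
End Z.
End ZS.

Ltac zs_find t env :=
  lazymatch env with
  | t :: _ => constr:(0%N)
  | _ :: ?r => let n := zs_find t r in constr:(S n)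
  end.
Ltac zs_ins t env :=
  let b := match constr:(tt) with
           | _ => let n := zs_find t env in constr:(true)
           | _ => constr:(false) end in
  match b with true => env | false => constr:(t :: env) end.
Ltac zs_collect t env :=
  lazymatch t with
  | (?a + ?b)%R => let e := zs_collect a env in zs_collect b e
  | (- ?a)%R => zs_collect a env
  | 0%R => env
  | _ => zs_ins t env
  end.
Ltac zs_reify t env :=
  lazymatch t with
  | (?a + ?b)%R => let x := zs_reify a env in let y := zs_reify b env in constr:(ZS.Add x y)
  | (- ?a)%R => let x := zs_reify a env in constr:(ZS.Opp x)
  | 0%R => constr:(ZS.Zero)
  | _ => let n := zs_find t env in constr:(ZS.Atom n)
  end.
Ltac zsolve :=
  lazymatch goal with
  | |- @eq ?T ?l ?r =>
    let env0 := constr:(@nil T) in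
    let env1 := zs_collect l env0 in
    let env := zs_collect r env1 in
    let el := zs_reify l env in
    let er := zs_reify r env in
    change (ZS.eval env el = ZS.eval env er);
    apply: (@ZS.sound _ env el er (size env)); [exact: leqnn | exact (erefl true)]
  end.

Section Basic.
Variable A : PreAdditive.
Local Notation "g ⊙ f" := (comp g f) (at level 40, left associativity).

Lemma compNl (x y z : A) (g : hom y z) (f : hom x y) : (- g) ⊙ f = - (g ⊙ f).
Proof. apply/eqP; rewrite -subr_eq0 opprK -compDl addNr; exact/eqP/comp0m. Qed.
Lemma compNr (x y z : A) (g : hom y z) (f : hom x y) : g ⊙ (- f) = - (g ⊙ f).
Proof. apply/eqP; rewrite -subr_eq0 opprK -compDr addNr; exact/eqP/compm0. Qed.
Lemma compBl (x y z : A) (g g' : hom y z) (f : hom x y) : (g - g') ⊙ f = g ⊙ f - g' ⊙ f.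
Proof. by rewrite compDl compNl. Qed.
Lemma compBr (x y z : A) (g : hom y z) (f f' : hom x y) : g ⊙ (f - f') = g ⊙ f - g ⊙ f'.
Proof. by rewrite compDr compNr. Qed.

Lemma lift_law (x y z t : A) (g : hom y z) (f : hom x y) (r : hom x z) :
  g ⊙ f = r -> forall h : hom z t, h ⊙ g ⊙ f = h ⊙ r.
Proof. by move=> E h; rewrite -compA E. Qed.

Ltac cnorm := repeat progress rewrite ?compDl ?compDr ?compNl ?compNr ?compA ?comp0m ?compm0 ?comp1m ?compm1
   ?addr0 ?add0r ?oppr0 ?subr0 ?sub0r ?opprK.
Ltac crw E := rewrite ?(E, lift_law E).
Ltac csolve := cnorm; zsolve.

Lemma zo_hom1 (x : A) (f g : hom x zo) : f = g.
Proof. by rewrite (zo_term f) (zo_term g). Qed.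
Lemma zo_hom2 (x : A) (f g : hom zo x) : f = g.
Proof. by rewrite (zo_init f) (zo_init g). Qed.

Lemma mono_kernel (x y K : A) (f : hom x y) (k : hom K x) : is_kernel f k -> mono k.
Proof.
case=> fk0 U t g h E.
have [h0 [_ U0]] : exists! h0, k ⊙ h0 = k ⊙ g by apply: U; rewrite compA fk0 comp0m.
by rewrite -(U0 g erefl) (U0 h (esym E)).
Qed.

Lemma epi_cokernel (x y C : A) (f : hom x y) (c : hom y C) : is_cokernel f c -> epi c.
Proof.
case=> cf0 U t g h E.
have [h0 [_ U0]] : exists! h0, h0 ⊙ c = g ⊙ c by apply: U; rewrite -compA cf0 compm0.
by rewrite -(U0 g erefl) (U0 h (esym E)).
Qed.

Lemma projective_zo : projective (@zo A).
Proof. move=> x y e _ g; exists 0; exact: zo_hom2. Qed.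

Lemma mono_comp (x y z : A) (g : hom y z) (f : hom x y) : mono g -> mono f -> mono (g ⊙ f).
Proof. by move=> mg mf t u v; rewrite -!compA => /mg /mf. Qed.
Lemma epi_comp (x y z : A) (g : hom y z) (f : hom x y) : epi g -> epi f -> epi (g ⊙ f).
Proof. by move=> mg mf t u v; rewrite !compA => /mf /mg. Qed.

Lemma mono0 (x y t : A) (m : hom x y) (g : hom t x) : mono m -> m ⊙ g = 0 -> g = 0.
Proof. move=> mm E; apply: mm; by rewrite E compm0. Qed.
Lemma epi0 (x y t : A) (e : hom x y) (g : hom y t) : epi e -> g ⊙ e = 0 -> g = 0.
Proof. move=> me E; apply: me; by rewrite E comp0m. Qed.


Lemma ker_fact (x y K t : A) (f : hom x y) (k : hom K x) (g : hom t x) :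
  is_kernel f k -> f ⊙ g = 0 -> exists h, k ⊙ h = g.
Proof. by case=> _ U /U [h [E _]]; exists h. Qed.
Lemma coker_fact (x y C t : A) (f : hom x y) (c : hom y C) (g : hom y t) :
  is_cokernel f c -> g ⊙ f = 0 -> exists h, h ⊙ c = g.
Proof. by case=> _ U /U [h [E _]]; exists h. Qed.

Hypothesis HA : abelian A.

Lemma ab_ker (x y : A) (f : hom x y) : exists K (k : hom K x), is_kernel f k.
Proof. by case: HA. Qed.
Lemma ab_coker (x y : A) (f : hom x y) : exists C (c : hom y C), is_cokernel f c.
Proof. by case: HA. Qed.

Lemma mono_ker_coker (x y C : A) (m : hom x y) (c : hom y C) :
  mono m -> is_cokernel m c -> is_kernel c m.
Proof.
move=> mm cc; case: HA => _ _ _ Hm _.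
have [Z [g gk]] := Hm _ _ m mm.
split; first by case: cc.
move=> t u cu0.
have [z zc] := coker_fact cc (proj1 gk).
have : g ⊙ u = 0 by rewrite -zc -compA cu0 compm0.
case/(proj2 gk) => h [hE _]; exists h; split => // h' E.
by apply: mm; rewrite E hE.
Qed.

Lemma epi_coker_ker (x y K : A) (e : hom x y) (k : hom K x) :
  epi e -> is_kernel e k -> is_cokernel k e.
Proof.
move=> me kk; case: HA => _ _ _ _ He.
have [Z [g gk]] := He _ _ e me.
split; first by case: kk.
move=> t u uk0.
have [z zc] := ker_fact kk (proj1 gk).
have : u ⊙ g = 0 by rewrite -zc compA uk0 comp0m.
case/(proj2 gk) => h [hE _]; exists h; split => // h' E.
by apply: me; rewrite E hE.
Qed.

Lemma mono_epi_iso (x y : A) (m : hom x y) : mono m -> epi m ->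
  exists h, h ⊙ m = idm x /\ m ⊙ h = idm y.
Proof.
move=> mm me; case: HA => _ _ _ Hm _.
have [Z [g [gm U]]] := Hm _ _ m mm.
have g0 : g = 0 by apply: (epi0 me).
have [h [hE _]] : exists! h, m ⊙ h = idm y by apply: U; rewrite g0 comp0m.
exists h; split => //; apply: mm; by rewrite compA hE comp1m compm1.
Qed.

Lemma image_fact (x y : A) (h : hom x y) : exists I (m : hom I y) (h' : hom x I),
  [/\ mono m, epi h', h = m ⊙ h' &
      forall C (c : hom y C), is_cokernel h c -> is_kernel c m].
Proof.
have [C0 [c0 cc0]] := ab_coker h.
have [I [m mk]] := ab_ker c0.
have [h' hE] := ker_fact mk (proj1 cc0).
have mm := mono_kernel mk.
have eh' : epi h'.
  move=> T s1 s2 E; apply/eqP; rewrite -subr_eq0; apply/eqP.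
  set s := s1 - s2.
  have sh : s ⊙ h' = 0 by rewrite /s compBl E subrr.
  have [N [n nk]] := ab_ker s.
  have [h'' h''E] := ker_fact nk sh.
  case: HA => _ _ _ Hm _.
  have [Z [g2 g2k]] := Hm _ _ _ (mono_comp mm (mono_kernel nk)).
  have : g2 ⊙ h = 0 by rewrite -hE -h''E (compA m) compA (proj1 g2k) comp0m.
  case/(coker_fact cc0) => z zE.
  have : g2 ⊙ m = 0 by rewrite -zE -compA (proj1 mk) compm0.
  case/(ker_fact g2k) => r rE.
  have nr : n ⊙ r = idm I by apply: mm; rewrite compA rE compm1.
  by rewrite -(compm1 s) -nr compA (proj1 nk) comp0m.
exists I, m, h'; split => // C c cc.
have cm : c ⊙ m = 0 by apply: (epi0 eh'); rewrite -compA hE (proj1 cc).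
split => // t u cu.
have [z zE] := coker_fact cc (proj1 cc0).
have : c0 ⊙ u = 0 by rewrite -zE -compA cu compm0.
case/(proj2 mk) => v [vE _]; exists v; split => // v' E.
by apply: mm; rewrite E vE.
Qed.

Lemma image_lift (x y C P : A) (h : hom x y) (c : hom y C) (g : hom P y) :
  is_cokernel h c -> projective P -> c ⊙ g = 0 -> exists t, h ⊙ t = g.
Proof.
move=> cc pP cg.
have [I [m [h' [mm eh' hE mk]]]] := image_fact h.
have [g' g'E] := ker_fact (mk _ _ cc) cg.
have [t tE] := pP _ _ _ eh' g'.
by exists t; rewrite hE -compA tE.
Qed.


Section Bip.
Variables (x y w : A) (p1 : hom w x) (p2 : hom w y) (i1 : hom x w) (i2 : hom y w).
Hypothesis B : is_biproduct p1 p2 i1 i2.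

Lemma bip_p1i1 : p1 ⊙ i1 = idm x. Proof. by case: B. Qed.
Lemma bip_p2i2 : p2 ⊙ i2 = idm y. Proof. by case: B. Qed.
Lemma bip_p1i2 : p1 ⊙ i2 = 0. Proof. by case: B. Qed.
Lemma bip_p2i1 : p2 ⊙ i1 = 0. Proof. by case: B. Qed.
Lemma bip_id : i1 ⊙ p1 + i2 ⊙ p2 = idm w. Proof. by case: B. Qed.

Lemma bip_mono (t : A) (u v : hom t w) : p1 ⊙ u = p1 ⊙ v -> p2 ⊙ u = p2 ⊙ v -> u = v.
Proof.
move=> E1 E2; rewrite -(comp1m u) -(comp1m v) -bip_id !compDl -!compA E1 E2 //.
Qed.
Lemma bip_epi (t : A) (u v : hom w t) : u ⊙ i1 = v ⊙ i1 -> u ⊙ i2 = v ⊙ i2 -> u = v.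
Proof.
move=> E1 E2; rewrite -(compm1 u) -(compm1 v) -bip_id !compDr !compA E1 E2 //.
Qed.

Lemma bip_proj : projective x -> projective y -> projective w.
Proof.
move=> Px Py a b e ee g.
have [h1 E1] := Px _ _ _ ee (g ⊙ i1).
have [h2 E2] := Py _ _ _ ee (g ⊙ i2).
exists (h1 ⊙ p1 + h2 ⊙ p2).
by rewrite compDr !compA E1 E2 -!compA -compDr bip_id compm1.
Qed.
End Bip.

Lemma bip_ex (x y : A) : exists w (p1 : hom w x) (p2 : hom w y) i1 i2,
  is_biproduct p1 p2 i1 i2.
Proof. by case: HA. Qed.

Definition is_pullback (X Y Z P : A) (f : hom X Z) (g : hom Y Z) (p : hom P X) (q : hom P Y) :=
  [/\ f ⊙ p = g ⊙ q,
      (forall T (u : hom T X) (v : hom T Y), f ⊙ u = g ⊙ v -> exists h, p ⊙ h = u /\ q ⊙ h = v)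
    & (forall T (h h' : hom T P), p ⊙ h = p ⊙ h' -> q ⊙ h = q ⊙ h' -> h = h')].

Definition is_pushout (X Y Z P : A) (f : hom Z X) (g : hom Z Y) (p : hom X P) (q : hom Y P) :=
  [/\ p ⊙ f = q ⊙ g,
      (forall T (u : hom X T) (v : hom Y T), u ⊙ f = v ⊙ g -> exists h, h ⊙ p = u /\ h ⊙ q = v)
    & (forall T (h h' : hom P T), h ⊙ p = h' ⊙ p -> h ⊙ q = h' ⊙ q -> h = h')].

Ltac bsimp B := crw (bip_p1i1 B); crw (bip_p2i2 B); crw (bip_p1i2 B); crw (bip_p2i1 B); cnorm.

Lemma pb_kernel (X Y Z P W : A) (f : hom X Z) (g : hom Y Z) (p : hom P X) (q : hom P Y)
  (p1 : hom W X) (p2 : hom W Y) i1 i2 :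
  is_biproduct p1 p2 i1 i2 -> is_pullback f g p q ->
  is_kernel (f ⊙ p1 - g ⊙ p2) (i1 ⊙ p + i2 ⊙ q).
Proof.
move=> B [C U M]; split.
  cnorm; bsimp B; rewrite C; zsolve.
move=> T u du.
have du' : f ⊙ (p1 ⊙ u) = g ⊙ (p2 ⊙ u).
  by apply/eqP; rewrite -subr_eq0 !compA -compBl du.
have [h [h1 h2]] := U _ _ _ du'.
have kh : (i1 ⊙ p + i2 ⊙ q) ⊙ h = u.
  by apply: (bip_mono B); cnorm; bsimp B; rewrite ?h1 ?h2.
exists h; split => // h' E; apply: M.
  have := congr1 (comp p1) E; rewrite -kh; cnorm; bsimp B; done.
have := congr1 (comp p2) E; rewrite -kh; cnorm; bsimp B; done.
Qed.


Lemma pb_ex (X Y Z : A) (f : hom X Z) (g : hom Y Z) :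
  exists P (p : hom P X) (q : hom P Y), is_pullback f g p q.
Proof.
have [W [p1 [p2 [i1 [i2 B]]]]] := bip_ex X Y.
have [P [k kk]] := ab_ker (f ⊙ p1 - g ⊙ p2).
exists P, (p1 ⊙ k), (p2 ⊙ k); split.
- by apply: subr0_eq; rewrite -(proj1 kk); csolve.
- move=> T u v E.
  have [h hE] : exists h, k ⊙ h = i1 ⊙ u + i2 ⊙ v.
    apply: (ker_fact kk); cnorm; bsimp B; rewrite E; zsolve.
  by exists h; rewrite -!compA hE; split; cnorm; bsimp B.
- move=> T h h' E1 E2; apply: (mono_kernel kk); apply: (bip_mono B).
    by rewrite !compA.
  by rewrite !compA.
Qed.

Lemma po_cokernel (X Y Z P W : A) (f : hom Z X) (g : hom Z Y) (p : hom X P) (q : hom Y P)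
  (p1 : hom W X) (p2 : hom W Y) i1 i2 :
  is_biproduct p1 p2 i1 i2 -> is_pushout f g p q ->
  is_cokernel (i1 ⊙ f - i2 ⊙ g) (p ⊙ p1 + q ⊙ p2).
Proof.
move=> B [C U M]; split.
  cnorm; bsimp B; rewrite C; zsolve.
move=> T u du.
have du' : u ⊙ i1 ⊙ f = u ⊙ i2 ⊙ g by apply: subr0_eq; rewrite -du; csolve.
have [h [h1 h2]] := U _ _ _ du'.
have kh : h ⊙ (p ⊙ p1 + q ⊙ p2) = u.
  apply: (bip_epi B); cnorm; rewrite ?h1 ?h2; bsimp B; rewrite ?h1 ?h2 //.
exists h; split => // h' E; apply: M.
  by have := congr1 (fun t => t ⊙ i1) E; rewrite -kh; cnorm; bsimp B.
by have := congr1 (fun t => t ⊙ i2) E; rewrite -kh; cnorm; bsimp B.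
Qed.

Lemma po_ex (X Y Z : A) (f : hom Z X) (g : hom Z Y) :
  exists P (p : hom X P) (q : hom Y P), is_pushout f g p q.
Proof.
have [W [p1 [p2 [i1 [i2 B]]]]] := bip_ex X Y.
have [P [c cc]] := ab_coker (i1 ⊙ f - i2 ⊙ g).
exists P, (c ⊙ i1), (c ⊙ i2); split.
- by apply: subr0_eq; rewrite -(proj1 cc); csolve.
- move=> T u v E.
  have [h hE] : exists h, h ⊙ c = u ⊙ p1 + v ⊙ p2.
    apply: (coker_fact cc); cnorm; bsimp B; rewrite E; zsolve.
  by exists h; rewrite !compA hE; split; cnorm; bsimp B.
- move=> T h h' E1 E2; apply: (epi_cokernel cc); apply: (bip_epi B).
    by rewrite -!compA.
  by rewrite -!compA.
Qed.


Lemma epi_of0 (x y : A) (e : hom x y) : (forall t (g : hom y t), g ⊙ e = 0 -> g = 0) -> epi e.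
Proof.
move=> H t g h E; apply: subr0_eq; apply: H; by rewrite compBl E subrr.
Qed.
Lemma mono_of0 (x y : A) (m : hom x y) : (forall t (g : hom t x), m ⊙ g = 0 -> g = 0) -> mono m.
Proof.
move=> H t g h E; apply: subr0_eq; apply: H; by rewrite compBr E subrr.
Qed.

Section PB.
Variables (X Y Z P : A) (f : hom X Z) (g : hom Y Z) (p : hom P X) (q : hom P Y).
Hypothesis PB : is_pullback f g p q.
Hypothesis JE : forall T (y : hom Z T), y ⊙ f = 0 -> y ⊙ g = 0 -> y = 0.

Lemma pb_data : exists W (p1 : hom W X) (p2 : hom W Y) i1 i2,
  [/\ is_biproduct p1 p2 i1 i2, is_kernel (f ⊙ p1 - g ⊙ p2) (i1 ⊙ p + i2 ⊙ q)
    & is_cokernel (i1 ⊙ p + i2 ⊙ q) (f ⊙ p1 - g ⊙ p2)].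
Proof.
have [W [p1 [p2 [i1 [i2 B]]]]] := bip_ex X Y.
have kk := pb_kernel B PB.
exists W, p1, p2, i1, i2; split => //; apply: epi_coker_ker => //.
apply: epi_of0 => T y yd; apply: JE.
  by have := congr1 (fun t => t ⊙ i1) yd; cnorm; bsimp B.
by have := congr1 (fun t => t ⊙ i2) yd; cnorm; bsimp B; move/eqP; rewrite oppr_eq0 => /eqP.
Qed.

Lemma pb_factor T (u : hom X T) (v : hom Y T) : u ⊙ p = v ⊙ q ->
  exists ga, ga ⊙ f = u /\ ga ⊙ g = v.
Proof.
move=> E; have [W [p1 [p2 [i1 [i2 [B kk cc]]]]]] := pb_data.
have [ga gaE] : exists ga, ga ⊙ (f ⊙ p1 - g ⊙ p2) = u ⊙ p1 - v ⊙ p2.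
  apply: (coker_fact cc); cnorm; bsimp B; rewrite E; zsolve.
exists ga; split.
  by have := congr1 (fun t => t ⊙ i1) gaE; cnorm; bsimp B.
have := congr1 (fun t => t ⊙ i2) gaE; cnorm; bsimp B.
by move/eqP; rewrite eqr_opp => /eqP.
Qed.

Lemma pb_split T (ph : hom P T) : projective Z -> exists u v, u ⊙ p + v ⊙ q = ph.
Proof.
move=> PZ; have [W [p1 [p2 [i1 [i2 [B kk cc]]]]]] := pb_data.
set d := f ⊙ p1 - g ⊙ p2; set k := i1 ⊙ p + i2 ⊙ q.
have [s sE] := PZ _ _ d (epi_cokernel cc) (idm Z).
have [r rE] : exists r, k ⊙ r = idm W - s ⊙ d.
  apply: (ker_fact kk); rewrite compBr compA sE comp1m compm1 subrr //.
have rk : r ⊙ k = idm P.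
  apply: (mono_kernel kk); rewrite compA rE compBl -compA (proj1 kk) compm0 subr0.
  by rewrite comp1m compm1.
exists (ph ⊙ r ⊙ i1), (ph ⊙ r ⊙ i2).
by rewrite -[RHS]compm1 -rk /k; csolve.
Qed.
End PB.

Lemma pb_epi (X Y Z P : A) (f : hom X Z) (g : hom Y Z) (p : hom P X) (q : hom P Y) :
  is_pullback f g p q -> epi f -> epi q.
Proof.
move=> PB ef; apply: epi_of0 => T z zq.
have JE : forall T (y : hom Z T), y ⊙ f = 0 -> y ⊙ g = 0 -> y = 0.
  by move=> T' y /(epi0 ef).
have E0 : (0 : hom X T) ⊙ p = z ⊙ q by rewrite zq comp0m.
have [ga [g1 g2]] := pb_factor PB JE E0.
by rewrite -g2 (epi0 ef g1) comp0m.
Qed.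

Section PO.
Variables (X Y Z P : A) (f : hom Z X) (g : hom Z Y) (p : hom X P) (q : hom Y P).
Hypothesis PO : is_pushout f g p q.

Lemma po_data : exists W (p1 : hom W X) (p2 : hom W Y) i1 i2,
  is_biproduct p1 p2 i1 i2 /\ is_cokernel (i1 ⊙ f - i2 ⊙ g) (p ⊙ p1 + q ⊙ p2).
Proof.
have [W [p1 [p2 [i1 [i2 B]]]]] := bip_ex X Y.
by exists W, p1, p2, i1, i2; split => //; apply: po_cokernel.
Qed.

Lemma po_factor T (u : hom T X) (v : hom T Y) :
  (forall S (t : hom S Z), f ⊙ t = 0 -> g ⊙ t = 0 -> t = 0) ->
  p ⊙ u = q ⊙ v -> exists t, f ⊙ t = u /\ g ⊙ t = v.
Proof.
move=> JM E; have [W [p1 [p2 [i1 [i2 [B cc]]]]]] := po_data.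
have mh : mono (i1 ⊙ f - i2 ⊙ g).
  apply: mono_of0 => S t ht; apply: JM.
    by have := congr1 (comp p1) ht; cnorm; bsimp B.
  by have := congr1 (comp p2) ht; cnorm; bsimp B; move/eqP; rewrite oppr_eq0 => /eqP.
have kk := mono_ker_coker mh cc.
have [t tE] : exists t, (i1 ⊙ f - i2 ⊙ g) ⊙ t = i1 ⊙ u - i2 ⊙ v.
  apply: (ker_fact kk); cnorm; bsimp B; rewrite E; zsolve.
exists t; split.
  by have := congr1 (comp p1) tE; cnorm; bsimp B.
have := congr1 (comp p2) tE; cnorm; bsimp B.
by move/eqP; rewrite eqr_opp => /eqP.
Qed.

Lemma po_lift T (ph : hom T P) : projective T -> exists u v, p ⊙ u + q ⊙ v = ph.
Proof.
move=> PT; have [W [p1 [p2 [i1 [i2 [B cc]]]]]] := po_data.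
have [w wE] := PT _ _ _ (epi_cokernel cc) ph.
by exists (p1 ⊙ w), (p2 ⊙ w); rewrite -wE; csolve.
Qed.

Lemma po_split T (w : hom Z T) : projective P ->
  (forall S (t : hom S Z), f ⊙ t = 0 -> g ⊙ t = 0 -> w ⊙ t = 0) ->
  exists u v, u ⊙ f + v ⊙ g = w.
Proof.
move=> PP Hw; have [W [p1 [p2 [i1 [i2 [B cc]]]]]] := po_data.
set h := i1 ⊙ f - i2 ⊙ g; set c := p ⊙ p1 + q ⊙ p2.
have [s sE] := PP _ _ c (epi_cokernel cc) (idm P).
have [I [m [h' [mm eh' hE mk]]]] := image_fact h.
have mk' := mk _ _ cc.
have [r rE] : exists r, m ⊙ r = idm W - s ⊙ c.
  apply: (ker_fact mk'); rewrite compBr compA sE comp1m compm1 subrr //.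
have rm : r ⊙ m = idm I.
  apply: mm; rewrite compA rE compBl -compA (proj1 mk') compm0 subr0.
  by rewrite comp1m compm1.
have [N [n nk]] := ab_ker h'.
have cn := epi_coker_ker eh' nk.
have [w' w'E] : exists w', w' ⊙ h' = w.
  apply: (coker_fact cn); apply: Hw.
    have : p1 ⊙ h ⊙ n = 0 by rewrite hE -compA -(compA m) (proj1 nk) !compm0.
    by rewrite /h; cnorm; bsimp B.
  have : p2 ⊙ h ⊙ n = 0 by rewrite hE -compA -(compA m) (proj1 nk) !compm0.
  by rewrite /h; cnorm; bsimp B; move/eqP; rewrite oppr_eq0 => /eqP.
have Yh : w' ⊙ r ⊙ h = w by rewrite hE -compA (compA r) rm comp1m.
exists (w' ⊙ r ⊙ i1), (- (w' ⊙ r ⊙ i2)).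
by rewrite -Yh /h; csolve.
Qed.
End PO.

End Basic.

Set Implicit Arguments. Unset Strict Implicit. Unset Printing Implicit Defensive.
Import GRing.Theory.
Local Open Scope ring_scope.

Section Two.
Variable A : PreAdditive.
Hypothesis HA : abelian A.
Hypothesis HP : enough_projectives A.
Local Notation "g ⊙ f" := (comp g f) (at level 40, left associativity).

Ltac cnorm := repeat progress rewrite ?compDl ?compDr ?compNl ?compNr ?compA ?comp0m ?compm0 ?comp1m ?compm1
   ?addr0 ?add0r ?oppr0 ?subr0 ?sub0r ?opprK; try reflexivity.
Ltac crw E := rewrite ?(E, lift_law E).
Ltac csolve := rewrite /=; cnorm; zsolve.
Ltac bsimp B := crw (bip_p1i1 B); crw (bip_p2i2 B); crw (bip_p1i2 B); crw (bip_p2i1 B); cnorm.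

Local Notation arr := (arr A).
Local Notation mor := (@mor A).

Lemma cover (X : A) : exists P (e : hom P X), projective P /\ epi e.
Proof. exact: HP. Qed.

Definition tP (P : A) : arr := Arr (0 : hom zo P).
Definition tT (T : A) : arr := Arr (0 : hom T zo).
Lemma inC_tP P : projective P -> inC (tP P). Proof. by []. Qed.
Lemma inC_tT T : inC (tT T). Proof. exact: projective_zo. Qed.

Lemma cellE (a b : arr) (f g : mor a b) al :
  is2cell f g al <-> m1 f - m1 g = al ⊙ amap a /\ m0 f - m0 g = amap b ⊙ al.
Proof. by []. Qed.

Lemma faithful_jm (a b : arr) (f : mor a b) : faithfulM f ->
  forall T (t : hom T (A1 a)), amap a ⊙ t = 0 -> m1 f ⊙ t = 0 -> t = 0.
Proof.
move=> Ff T t at0 ft0.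
have [P [e [pP ee]]] := cover T.
apply: (epi0 ee).
have := Ff (tP P) pP (zeroM _ _) (zeroM _ _) (t ⊙ e) 0.
apply.
- by split => /=; rewrite subrr; [rewrite compm0 | rewrite compA at0 comp0m].
- by split; rewrite /= subrr ?compm0 ?comp0m.
- by rewrite compA ft0 comp0m compm0.
Qed.

Lemma cofaithful_je (a b : arr) (f : mor a b) : cofaithfulM f ->
  forall T (y : hom (A0 b) T), y ⊙ m0 f = 0 -> y ⊙ amap b = 0 -> y = 0.
Proof.
move=> Ff T y yf yb.
have := Ff (tT T) (@inC_tT T) (zeroM _ _) (zeroM _ _) y 0.
apply.
- by split; rewrite /= subrr ?yb //; apply: zo_hom1.
- by split; rewrite /= subrr ?comp0m ?compm0.
- by rewrite yf comp0m.
Qed.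


Lemma discrete_mono (a : arr) : discrete a -> mono (amap a).
Proof.
move=> D; apply: mono_of0 => T t at0.
by apply: (faithful_jm D) => //=; rewrite comp0m.
Qed.

Lemma mono_discrete (a : arr) : mono (amap a) -> discrete a.
Proof.
move=> M x _ v w al be [_ H1] [_ H2] _.
by apply: M; rewrite -H1 -H2.
Qed.

Lemma codiscrete_epi (a : arr) : codiscrete a -> epi (amap a).
Proof.
move=> D; apply: epi_of0 => T t ta0.
by apply: (cofaithful_je D) => //=; rewrite compm0.
Qed.

Lemma disc_part : discrete_coker_equivalence A.
Proof.
split.
  move=> a b Ia Ib Da Db Ca ca Cb cb cca ccb.
  have ma := discrete_mono Da; have mb := discrete_mono Db.
  have kb := mono_ker_coker HA mb ccb.
  split.
    move=> f g h E1 E2.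
    have : cb ⊙ (m0 f - m0 g) = 0 by rewrite compBr -E1 -E2 subrr.
    case/(ker_fact kb) => al alE.
    exists al; split; last by rewrite /= alE.
    apply: mb; rewrite compBr !mcomm -compBl -alE compA //.
  move=> h.
  have [f0 f0E] := Ia _ _ _ (epi_cokernel ccb) (h ⊙ ca).
  have : cb ⊙ (f0 ⊙ amap a) = 0 by rewrite compA f0E -compA (proj1 cca) compm0.
  case/(ker_fact kb) => f1 f1E.
  by exists (Mor f1E); rewrite /= f0E.
move=> X.
have [P [e [pP ee]]] := cover X.
have [K [k kk]] := ab_ker HA e.
exists (Arr k); split => //.
  exact/mono_discrete/(mono_kernel kk).
by exists e; apply: epi_coker_ker.
Qed.

Lemma codisc_part : codiscrete_ker_equivalence A.
Proof.
split.
  move=> a b Ia Ib Da Db Ka ka Kb kb kka kkb.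
  have ea := codiscrete_epi Da; have eb := codiscrete_epi Db.
  have ca := epi_coker_ker HA ea kka.
  split.
    move=> f g h E1 E2.
    have : (m1 f - m1 g) ⊙ ka = 0 by rewrite compBl -E1 -E2 subrr.
    case/(coker_fact ca) => al alE.
    exists al; split; first by rewrite /= alE.
    apply: ea; rewrite compBl -!mcomm -compBr -alE compA //.
  move=> h.
  have [s sE] := Ia _ _ _ ea (idm _).
  have [r rE] : exists r, ka ⊙ r = idm _ - s ⊙ amap a.
    apply: (ker_fact kka); rewrite compBr compA sE comp1m compm1 subrr //.
  have rk : r ⊙ ka = idm _.
    apply: (mono_kernel kka); rewrite compA rE compBl -compA (proj1 kka) compm0 subr0.
    by rewrite comp1m compm1.
  have E : amap b ⊙ (kb ⊙ h ⊙ r) = (0 : hom (A0 a) (A0 b)) ⊙ amap a.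
    by rewrite !compA (proj1 kkb) !comp0m.
  by exists (Mor E); rewrite /= -compA rk compm1.
move=> X.
exists (Arr (0 : hom X zo)); split.
- exact: projective_zo.
- move=> x _ v w al be _ _ _; exact: zo_hom2.
- exists (idm X); split; first by rewrite compm1.
  move=> t g _; exists g; split; first by rewrite comp1m.
  by move=> g'; rewrite comp1m.
Qed.


Lemma cell0 (a b : arr) (f g : mor a b) : m1 f = m1 g -> m0 f = m0 g -> is2cell f g 0.
Proof. by move=> E1 E0; split; rewrite ?E1 ?E0 subrr ?comp0m ?compm0. Qed.

Lemma zero2 : is_2zero (Z A).
Proof.
split; first exact: projective_zo.
move=> x _; split; split.
- by exists (zeroM _ _).
- move=> f g; exists 0; split; first by split; apply: zo_hom1.
  by move=> al _; apply: zo_hom1.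
- by exists (zeroM _ _).
- move=> f g; exists 0; split; first by split; apply: zo_hom2.
  by move=> al _; apply: zo_hom2.
Qed.

Section BipArr.
Variables (a b : arr).
Hypotheses (Ia : inC a) (Ib : inC b).
Variables (W1 W0 : A) (pi1 : hom W1 (A1 a)) (pi2 : hom W1 (A1 b)) (io1 : hom (A1 a) W1)
  (io2 : hom (A1 b) W1) (r1 : hom W0 (A0 a)) (r2 : hom W0 (A0 b)) (j1 : hom (A0 a) W0)
  (j2 : hom (A0 b) W0).
Hypotheses (B1 : is_biproduct pi1 pi2 io1 io2) (B0 : is_biproduct r1 r2 j1 j2).

Definition pA : arr := Arr (j1 ⊙ amap a ⊙ pi1 + j2 ⊙ amap b ⊙ pi2).
Ltac bb := repeat progress (bsimp B0; bsimp B1); try reflexivity.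

Lemma pA1_c : amap a ⊙ pi1 = r1 ⊙ amap pA. Proof. rewrite /=; cnorm; bb. Qed.
Lemma pA2_c : amap b ⊙ pi2 = r2 ⊙ amap pA. Proof. rewrite /=; cnorm; bb. Qed.
Lemma iA1_c : amap pA ⊙ io1 = j1 ⊙ amap a. Proof. rewrite /=; cnorm; bb. Qed.
Lemma iA2_c : amap pA ⊙ io2 = j2 ⊙ amap b. Proof. rewrite /=; cnorm; bb. Qed.
Definition pM1 : mor pA a := @Mor _ pA a r1 pi1 pA1_c.
Definition pM2 : mor pA b := @Mor _ pA b r2 pi2 pA2_c.
Definition iM1 : mor a pA := @Mor _ a pA j1 io1 iA1_c.
Definition iM2 : mor b pA := @Mor _ b pA j2 io2 iA2_c.

Lemma bipA : is_2biproduct pM1 pM2 iM1 iM2.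
Proof.
split; first split.
- move=> x Ix; split.
  + move=> v v' ga ga' _ _ E1 E2; exact: (bip_mono B1).
  + move=> v v' be1 be2 [H11 H10] [H21 H20].
    exists (io1 ⊙ be1 + io2 ⊙ be2); split; last 2 first.
    * by rewrite /=; cnorm; bb.
    * by rewrite /=; cnorm; bb.
    split.
      apply: (bip_mono B1); cnorm; bb.
        by move: H11 => /= ->; cnorm.
      by move: H21 => /= ->; cnorm.
    apply: (bip_mono B0); rewrite /=; cnorm; bb.
      by move: H10 => /= ->; cnorm.
    by move: H20 => /= ->; cnorm.
  + move=> w1 w2.
    have E : amap pA ⊙ (io1 ⊙ m1 w1 + io2 ⊙ m1 w2) = (j1 ⊙ m0 w1 + j2 ⊙ m0 w2) ⊙ amap x.
      rewrite /=; cnorm; bb; rewrite -!compA !mcomm; cnorm.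
    exists (Mor E), 0, 0; split; apply: cell0; rewrite /=; cnorm; bb.
- move=> x Ix; split.
  + move=> v v' ga ga' _ _ E1 E2; by apply: (bip_epi B0); [exact: E1 | exact: E2].
  + move=> v v' be1 be2 [H11 H10] [H21 H20].
    exists (be1 ⊙ r1 + be2 ⊙ r2); split; last 2 first.
    * by rewrite /=; cnorm; bb.
    * by rewrite /=; cnorm; bb.
    split.
      apply: (bip_epi B1); rewrite /=; cnorm; bb.
        by move: H11 => /= <-; cnorm.
      by move: H21 => /= <-; cnorm.
    apply: (bip_epi B0); cnorm; bb.
      by move: H10 => /= ->; cnorm.
    by move: H20 => /= ->; cnorm.
  + move=> w1 w2.
    have E : amap x ⊙ (m1 w1 ⊙ pi1 + m1 w2 ⊙ pi2) = (m0 w1 ⊙ r1 + m0 w2 ⊙ r2) ⊙ amap pA.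
      rewrite /=; cnorm; bb; rewrite !mcomm; cnorm.
    exists (@Mor _ pA x _ _ E), 0, 0; split; apply: cell0; rewrite /=; cnorm; bb.
- by exists 0; apply: cell0; rewrite /=; bb.
- by exists 0; apply: cell0; rewrite /=; bb.
- by exists 0; apply: cell0; rewrite /=; bb.
- by exists 0; apply: cell0; rewrite /=; bb.
Qed.
End BipArr.

Lemma additive2 : two_additive A.
Proof.
split; first exact: zero2.
move=> a b Ia Ib.
have [W1 [pi1 [pi2 [io1 [io2 B1]]]]] := bip_ex HA (A1 a) (A1 b).
have [W0 [r1 [r2 [j1 [j2 B0]]]]] := bip_ex HA (A0 a) (A0 b).
eexists _, _, _, _, _; split; last first.
  exact: (bipA B1 B0).
exact: (bip_proj B0 Ia Ib).
Qed.


Section Kernel.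
Variables (a b : arr) (f : mor a b).
Hypotheses (Ia : inC a) (Ib : inC b).
Variables (Q : A) (q1 : hom Q (A0 a)) (q2 : hom Q (A1 b)).
Hypothesis PBQ : is_pullback (m0 f) (amap b) q1 q2.
Variables (P : A) (e : hom P Q).
Hypotheses (pP : projective P) (ee : epi e).
Variables (t : hom (A1 a) Q).
Hypotheses (ht1 : q1 ⊙ t = amap a) (ht2 : q2 ⊙ t = m1 f).
Variables (K1 : A) (r1 : hom K1 P) (r2 : hom K1 (A1 a)).
Hypothesis PBK : is_pullback e t r1 r2.

Definition kA : arr := Arr r1.
Lemma uM_c : amap a ⊙ r2 = (q1 ⊙ e) ⊙ amap kA.
Proof. case: PBK => C _ _; by rewrite /= -compA C compA ht1. Qed.
Definition uM : mor kA a := @Mor _ kA a _ _ uM_c.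
Definition kap : hom (A0 kA) (A1 b) := q2 ⊙ e.

Lemma ker_explicit : is_2kernel f uM kap.
Proof.
case: PBQ => CQ UQ MQ; case: PBK => CK UK MK.
split.
  split => /=; rewrite subr0.
    by rewrite -compA CK compA ht2.
  by rewrite /kap !compA CQ.
move=> x Ix; split.
- move=> v v' ga ga' [_ H1] [_ H2] E; apply: MK => //.
  by rewrite -H1 -H2.
- move=> v v' be [H1 H0] /= E.
  have E' : e ⊙ (m0 v - m0 v') = t ⊙ be.
    apply: MQ.
      by rewrite (compA q1 t) ht1 -H0 /=; csolve.
    by rewrite (compA q2 t) ht2; move: E; rewrite /kap; cnorm => ->; zsolve.
  have [ga [g1 g2]] := UK _ _ _ E'.
  exists ga; split => //; split => /=; last by rewrite g1.
  apply: MK.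
    by have mv := mcomm v; have mv' := mcomm v'; rewrite /= in mv mv'; rewrite compBr mv mv' compA g1 compBl.
  by rewrite compBr compA g2; move: H1 => /= ->.
- move=> w ph [/= H1 H0]; rewrite subr0 in H1; rewrite subr0 in H0.
  have [y [y1 y2]] := UQ _ _ _ H0.
  have [v0 v0E] := Ix _ _ _ ee y.
  have E2 : e ⊙ (v0 ⊙ amap x) = t ⊙ m1 w.
    apply: MQ.
      by rewrite (compA e) v0E compA y1 compA ht1 mcomm.
    by rewrite (compA e) v0E compA y2 compA ht2 H1.
  have [v1 [v11 v12]] := UK _ _ _ E2.
  have vc : amap kA ⊙ v1 = v0 ⊙ amap x by [].
  exists (@Mor _ x kA _ _ vc), 0; split.
    apply: cell0 => /=; first by [].
    by rewrite -compA v0E y1.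
  by rewrite /= compm0 add0r /kap -compA v0E y2.
Qed.
End Kernel.

Lemma has_kernels : has_2kernels A.
Proof.
move=> a b f Ia Ib.
have [Q [q1 [q2 PBQ]]] := pb_ex HA (m0 f) (amap b).
have [P [e [pP ee]]] := cover Q.
have [t [ht1 ht2]] : exists t, q1 ⊙ t = amap a /\ q2 ⊙ t = m1 f.
  by case: PBQ => _ U _; apply: U; rewrite mcomm.
have [K1 [r1 [r2 PBK]]] := pb_ex HA e t.
exists (kA r1), (uM ht1 PBK), (kap q2 e r1); split => //.
exact: (ker_explicit PBQ ee ht1 ht2 PBK).
Qed.


Section Cokernel.
Variables (a b : arr) (f : mor a b).
Variables (C1 : A) (inc1 : hom (A0 a) C1) (inc2 : hom (A1 b) C1).
Hypothesis PO : is_pushout (amap a) (m1 f) inc1 inc2.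
Variable (cc : hom C1 (A0 b)).
Hypotheses (hc1 : cc ⊙ inc1 = m0 f) (hc2 : cc ⊙ inc2 = amap b).

Definition cA : arr := Arr cc.
Lemma qM_c : amap cA ⊙ inc2 = idm (A0 b) ⊙ amap b.
Proof. by rewrite /= hc2 comp1m. Qed.
Definition qM : mor b cA := @Mor _ b cA _ _ qM_c.

Lemma coker_explicit : is_2cokernel f qM inc1.
Proof.
case: PO => CP UP MP.
split.
  split => /=; rewrite subr0 ?comp1m //.
move=> x Ix; split.
- move=> v v' ga ga' _ _; by rewrite /= !compm1.
- move=> v v' be [/= H1 H0] /= E.
  exists be; split; last by rewrite compm1.
  split => /=.
    apply: MP; rewrite compBl -compA ?hc1 ?hc2.
      by rewrite E; zsolve.
    by rewrite H1.
  by rewrite -H0 !compm1.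
- move=> w ph [/= H1 H0]; rewrite subr0 in H1; rewrite subr0 in H0.
  have [v1 [v11 v12]] := UP _ _ _ (esym H1).
  have vc : amap x ⊙ v1 = m0 w ⊙ amap cA.
    apply: MP; rewrite -!compA /= ?hc1 ?hc2 ?v11 ?v12 ?mcomm //.
  exists (@Mor _ cA x _ _ vc), 0; split.
    by apply: cell0; rewrite /= ?compm1.
  by rewrite /= v11 comp0m add0r.
Qed.
End Cokernel.

Lemma has_cokernels : has_2cokernels A.
Proof.
move=> a b f Ia Ib.
have [C1 [inc1 [inc2 PO]]] := po_ex HA (amap a) (m1 f).
have [cc [hc1 hc2]] : exists cc, cc ⊙ inc1 = m0 f /\ cc ⊙ inc2 = amap b.
  by case: PO => _ U _; apply: U; rewrite mcomm.
exists (cA cc), (qM hc2), inc1; split => //.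
exact: (coker_explicit PO hc1 hc2).
Qed.


Lemma jker (x y z : A) (g : hom x y) (h : hom x z) : exists K (k : hom K x),
  [/\ mono k, g ⊙ k = 0, h ⊙ k = 0 &
      forall T (xi : hom T x), g ⊙ xi = 0 -> h ⊙ xi = 0 -> exists xi', k ⊙ xi' = xi].
Proof.
have [K1 [k1 kk1]] := ab_ker HA g.
have [K [k2 kk2]] := ab_ker HA (h ⊙ k1).
exists K, (k1 ⊙ k2); split.
- exact: mono_comp (mono_kernel kk1) (mono_kernel kk2).
- by rewrite compA (proj1 kk1) comp0m.
- by rewrite compA (proj1 kk2).
- move=> T xi g0 h0.
  have [yy yE] := ker_fact kk1 g0.
  have : h ⊙ k1 ⊙ yy = 0 by rewrite -compA yE.
  case/(ker_fact kk2) => zz zE; exists zz; by rewrite -compA zE.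
Qed.

Lemma jcoker (x y z : A) (g : hom y x) (h : hom z x) : exists C (c : hom x C),
  [/\ epi c, c ⊙ g = 0, c ⊙ h = 0,
      (forall T (xi : hom x T), xi ⊙ g = 0 -> xi ⊙ h = 0 -> exists xi', xi' ⊙ c = xi) &
      (forall P (xi : hom P x), projective P -> c ⊙ xi = 0 ->
         exists y1 y0, g ⊙ y1 + h ⊙ y0 = xi)].
Proof.
have [C1 [c1 cc1]] := ab_coker HA g.
have [C [c2 cc2]] := ab_coker HA (c1 ⊙ h).
exists C, (c2 ⊙ c1); split.
- exact: epi_comp (epi_cokernel cc2) (epi_cokernel cc1).
- by rewrite -compA (proj1 cc1) compm0.
- by rewrite -compA (proj1 cc2).
- move=> T xi g0 h0.
  have [yy yE] := coker_fact cc1 g0.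
  have : yy ⊙ (c1 ⊙ h) = 0 by rewrite compA yE.
  case/(coker_fact cc2) => zz zE; exists zz; by rewrite compA zE.
- move=> P xi pP cx.
  have cx' : c2 ⊙ (c1 ⊙ xi) = 0 by rewrite compA.
  have [y0 y0E] := image_lift HA cc2 pP cx'.
  have : c1 ⊙ (xi - h ⊙ y0) = 0 by rewrite compBr -y0E compA subrr.
  case/(image_lift HA cc1 pP) => y1 y1E.
  by exists y1, y0; rewrite y1E subrK.
Qed.

Section Pip.
Variables (a b : arr) (f : mor a b).
Variables (K : A) (kK : hom K (A1 a)).
Hypotheses (mK : mono kK) (aK : amap a ⊙ kK = 0) (fK : m1 f ⊙ kK = 0)
  (UK : forall T (xi : hom T (A1 a)), amap a ⊙ xi = 0 -> m1 f ⊙ xi = 0 ->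
        exists xi', kK ⊙ xi' = xi).
Variables (P : A) (e : hom P K) (ee : epi e) (P1 : A) (pk : hom P1 P).
Hypothesis kpk : is_kernel e pk.

Definition pipA : arr := Arr pk.
Definition pip_pi : hom (A0 pipA) (A1 a) := kK ⊙ e.

Lemma pip_explicit : is_pip f pip_pi.
Proof.
have mpk := mono_kernel kpk.
split.
- split => /=; rewrite subrr /pip_pi.
    by rewrite -compA (proj1 kpk) compm0.
  by rewrite compA aK comp0m.
- by rewrite /pip_pi compA fK comp0m.
move=> x Ix; split.
- move=> v v' ga ga' [_ H1] [_ H2]; apply: mpk; by rewrite -H1 -H2.
- move=> v v' E.
  have : e ⊙ (m0 v - m0 v') = 0.
    apply: (mono0 mK); rewrite !compBr !compA; move: E; rewrite /pip_pi => ->.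
    by rewrite subrr.
  case/(ker_fact kpk) => ga gaE.
  exists ga; split => /=; last by rewrite gaE.
  apply: mpk; have mv := mcomm v; have mv' := mcomm v'; rewrite /= in mv mv'.
  by rewrite compBr mv mv' compA gaE compBl.
- move=> xi [/= H1 H0] f0; rewrite subrr in H1; rewrite subrr in H0.
  have [xi' xiE] := UK (esym H0) f0.
  have [v0 v0E] := Ix _ _ _ ee xi'.
  have : e ⊙ (v0 ⊙ amap x) = 0.
    rewrite compA v0E; apply: (mono0 mK).
    by rewrite compA xiE -H1.
  case/(ker_fact kpk) => v1 v1E.
  exists (@Mor _ x pipA _ _ v1E).
  by rewrite /pip_pi /= -compA v0E.
Qed.
End Pip.

Lemma has_pips_ : has_pips A.
Proof.
move=> a b f Ia Ib.
have [K [kK [mK aK fK UK]]] := jker (amap a) (m1 f).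
have [P [e [pP ee]]] := cover K.
have [P1 [pk kpk]] := ab_ker HA e.
exists (pipA pk), (pip_pi kK e pk); split => //.
exact: pip_explicit.
Qed.

Section Copip.
Variables (a b : arr) (f : mor a b).
Variables (Cq : A) (c : hom (A0 b) Cq).
Hypotheses (ec : epi c) (cb : c ⊙ amap b = 0) (cf : c ⊙ m0 f = 0)
  (UC : forall T (xi : hom (A0 b) T), xi ⊙ amap b = 0 -> xi ⊙ m0 f = 0 ->
        exists xi', xi' ⊙ c = xi).

Definition copA : arr := Arr (0 : hom Cq zo).

Lemma copip_explicit : is_copip f (c : hom (A0 b) (A1 copA)).
Proof.
split.
- split => /=; rewrite subrr //; exact: zo_hom1.
- exact: cf.
move=> x Ix; split.
- move=> v v' ga ga' _ _; exact: zo_hom2.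
- move=> v v' E; exists 0; split => /=.
    by rewrite compm0; apply/eqP; rewrite subr_eq0; apply/eqP/ec.
  exact: zo_hom2.
- move=> xi [/= H1 H0] f0; rewrite subrr in H1; rewrite subrr in H0.
  have [v1 v1E] := UC (esym H1) f0.
  have vc : amap x ⊙ v1 = (0 : hom (A0 copA) (A0 x)) ⊙ amap copA.
    rewrite comp0m; apply: (epi0 ec); by rewrite -compA v1E -H0.
  by exists (@Mor _ copA x _ _ vc).
Qed.
End Copip.

Lemma has_copips_ : has_copips A.
Proof.
move=> a b f Ia Ib.
have [C [c [ec cb cf UC _]]] := jcoker (amap b) (m0 f).
exists (copA C), c; split; first exact: projective_zo.
exact: copip_explicit.
Qed.


Section Root.
Variables (a b : arr) (al : hom (A0 a) (A1 b)).
Hypothesis (alc : al ⊙ amap a = 0).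
Variables (Ka : A) (ka : hom Ka (A0 a)).
Hypothesis kka : is_kernel al ka.
Variable (a' : hom (A1 a) Ka).
Hypothesis a'E : ka ⊙ a' = amap a.
Variables (P : A) (e : hom P Ka) (ee : epi e).
Variables (R1 : A) (s1 : hom R1 P) (s2 : hom R1 (A1 a)).
Hypothesis PB : is_pullback e a' s1 s2.

Definition rootA : arr := Arr s1.
Lemma rootM_c : amap a ⊙ s2 = (ka ⊙ e) ⊙ amap rootA.
Proof. case: PB => C _ _; by rewrite /= -compA C compA a'E. Qed.
Definition rootM : mor rootA a := @Mor _ rootA a _ _ rootM_c.

Lemma root_explicit : is_root al rootM.
Proof.
have mka := mono_kernel kka.
case: PB => CP UP MP.
split; first by rewrite /= compA (proj1 kka) comp0m.
move=> x Ix; split.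
- move=> v v' ga ga' [_ H1] [_ H2] E; apply: MP => //.
  by rewrite -H1 -H2.
- move=> v v' be [H1 H0].
  have E' : e ⊙ (m0 v - m0 v') = a' ⊙ be.
    apply: mka; rewrite (compA ka a') a'E -H0 /=; csolve.
  have [ga [g1 g2]] := UP _ _ _ E'.
  exists ga; split => //; split => /=; last by rewrite g1.
  apply: MP.
    have mv := mcomm v; have mv' := mcomm v'; rewrite /= in mv mv'.
    by rewrite compBr mv mv' compA g1 compBl.
  by rewrite compBr compA g2; move: H1 => /= ->.
- move=> w aw.
  have [w0 w0E] := ker_fact kka aw.
  have [v0 v0E] := Ix _ _ _ ee w0.
  have E2 : e ⊙ (v0 ⊙ amap x) = a' ⊙ m1 w.
    by apply: mka; rewrite (compA ka a') a'E mcomm (compA e) v0E compA w0E.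
  have [v1 [v11 v12]] := UP _ _ _ E2.
  have vc : amap rootA ⊙ v1 = v0 ⊙ amap x by [].
  exists (@Mor _ x rootA _ _ vc), 0.
  apply: cell0 => //=; by rewrite -compA v0E.
Qed.
End Root.

Lemma has_roots_ : has_roots A.
Proof.
move=> a b al Ia Ib [/= H1 _]; rewrite subrr in H1.
have [Ka [ka kka]] := ab_ker HA al.
have [a' a'E] := ker_fact kka (esym H1).
have [P [e [pP ee]]] := cover Ka.
have [R1 [s1 [s2 PB]]] := pb_ex HA e a'.
exists (rootA s1), (rootM a'E PB); split => //.
exact: (root_explicit kka a'E ee PB).
Qed.

Section Coroot.
Variables (a b : arr) (al : hom (A0 a) (A1 b)).
Variables (Ca : A) (ca : hom (A1 b) Ca).
Hypothesis cca : is_cokernel al ca.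
Variable (b' : hom Ca (A0 b)).
Hypothesis b'E : b' ⊙ ca = amap b.

Definition corootA : arr := Arr b'.
Lemma corootM_c : amap corootA ⊙ ca = idm (A0 b) ⊙ amap b.
Proof. by rewrite /= b'E comp1m. Qed.
Definition corootM : mor b corootA := @Mor _ b corootA _ _ corootM_c.

Lemma coroot_explicit : is_coroot al corootM.
Proof.
have eca := epi_cokernel cca.
split; first exact: (proj1 cca).
move=> x Ix; split.
- move=> v v' ga ga' _ _; by rewrite /= !compm1.
- move=> v v' be [/= H1 H0].
  exists be; split; last by rewrite compm1.
  split => /=; last by rewrite -H0 !compm1.
  by apply: eca; rewrite compBl -compA b'E H1.
- move=> w wa.
  have [v1 v1E] := coker_fact cca wa.
  have vc : amap x ⊙ v1 = m0 w ⊙ amap corootA.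
    by apply: eca; rewrite -!compA /= v1E b'E mcomm.
  exists (@Mor _ corootA x _ _ vc), 0.
  by apply: cell0; rewrite /= ?compm1.
Qed.
End Coroot.

Lemma has_coroots_ : has_coroots A.
Proof.
move=> a b al Ia Ib [_ /= H0]; rewrite subrr in H0.
have [Ca [ca cca]] := ab_coker HA al.
have [b' b'E] := coker_fact cca (esym H0).
exists (corootA b'), (corootM b'E); split => //.
exact: (coroot_explicit cca b'E).
Qed.


Lemma lin_close (V : zmodType) (l r l' r' : V) : l' = r' -> l - r = l' - r' -> l = r.
Proof. by move=> E1 E2; apply/subr0_eq; rewrite E2 E1 subrr. Qed.
Lemma eqD (V : zmodType) (a b c d : V) : a = b -> c = d -> a + c = b + d.
Proof. by move=> -> ->. Qed.
Lemma eqN (V : zmodType) (a b : V) : a = b -> - a = - b.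
Proof. by move=> ->. Qed.
Ltac lin E := apply: (lin_close E); csolve.
Notation "X <| E" := (congr1 (comp X) E) (at level 20).
Notation "E |> Y" := (congr1 (fun t => comp t Y) E) (at level 20).

Section Puppe1.
Variables (a b : arr) (f : mor a b).
Hypothesis JM : forall T (t : hom T (A1 a)), amap a ⊙ t = 0 -> m1 f ⊙ t = 0 -> t = 0.
Hypothesis Ff : faithfulM f.
Variables (C1 : A) (inc1 : hom (A0 a) C1) (inc2 : hom (A1 b) C1).
Hypothesis PO : is_pushout (amap a) (m1 f) inc1 inc2.
Variable (cc : hom C1 (A0 b)).
Hypotheses (hc1 : cc ⊙ inc1 = m0 f) (hc2 : cc ⊙ inc2 = amap b).

Lemma puppe1_explicit : is_2kernel (qM hc2) f inc1.
Proof.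
have JM' : forall S (t : hom S (A1 a)), amap a ⊙ t = 0 -> m1 f ⊙ t = 0 -> t = 0 by [].
split; first exact: (proj1 (coker_explicit PO hc1 hc2)).
move=> x Ix; split.
- move=> v v' ga ga' H1 H2 E; exact: (Ff Ix H1 H2 E).
- move=> v v' be [/= H1 H0] /= E.
  have E' : inc1 ⊙ (m0 v - m0 v') = inc2 ⊙ be by lin E.
  have [ga [g1 g2]] := po_factor HA PO JM' E'.
  exists ga; split => //; split => //=.
  apply: subr0_eq; apply: JM.
    by lin (eqD (eqD (mcomm v) (eqN (mcomm v'))) (eqN (g1 |> amap x))).
  by lin (eqD H1 (eqN (g2 |> amap x))).
- move=> w ph [/= H1 H0].
  have [u [v' phE]] := po_lift HA PO ph Ix.
  have E2 : inc1 ⊙ (u ⊙ amap x) = inc2 ⊙ (m1 w - v' ⊙ amap x).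
    by lin (eqD (phE |> amap x) (eqN H1)).
  have [v1 [g1 g2]] := po_factor HA PO JM' E2.
  exists (@Mor _ x a _ _ g1), (- v'); split.
    split => /=; first by lin g2.
    by lin (eqD (eqD (eqN H0) (cc <| phE)) (eqN (eqD (hc1 |> u) (hc2 |> v')))).
  by rewrite /=; lin phE.
Qed.
End Puppe1.


Lemma puppe1_transfer (a b : arr) (f : mor a b) (Ff : faithfulM f)
  (cs : arr) (qs : mor b cs) (zs : hom (A0 a) (A1 cs)) (Ics : inC cs)
  (CKs : is_2cokernel f qs zs) (KKs : is_2kernel qs f zs)
  (c : arr) (q : mor b c) (ze : hom (A0 a) (A1 c)) (Ic : inC c)
  (CK : is_2cokernel f q ze) : is_2kernel q f ze.
Proof.
case: (CK) => Zc CKu; case: (CKs) => Zs CKsu.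
have [_ _ CK3] := CKu cs Ics.
have [s [th [Hth Eth]]] := CK3 qs zs Zs.
have [_ _ CKs3] := CKsu c Ic.
have [s' [th' [Hth' Eth']]] := CKs3 q ze Zc.
have [CK1 CK2 _] := CKu c Ic.
have Hcell : is2cell (compM (compM s' s) q) (compM (idM c) q) (m1 s' ⊙ th + th').
  split.
    by lin (eqD (m1 s' <| Hth.1) Hth'.1).
  by lin (eqD (eqD (m0 s' <| Hth.2) Hth'.2) (eqN (mcomm s' |> th))).
have Hcond : m1 (compM s' s) ⊙ ze = (m1 s' ⊙ th + th') ⊙ m0 f + m1 (idM c) ⊙ ze.
  by lin (eqD (m1 s' <| Eth) Eth').
have [mu [Hmu _]] := CK2 _ _ _ Hcell Hcond.
split => // x Ix; have [KKs1 KKs2 KKs3] := (proj2 KKs) x Ix; split.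
- move=> v v' ga ga' H1 H2 E; exact: (Ff _ Ix _ _ _ _ H1 H2 E).
- move=> v v' be Hbe E.
  have Es : zs ⊙ m0 v = m1 qs ⊙ be + zs ⊙ m0 v'.
    lin (eqD (eqD (eqD (m1 s <| E) (eqN (Eth |> m0 v))) (eqD (Eth |> m0 v') (Hth.1 |> be)))
      (eqN (th <| Hbe.2))).
  exact: KKs2 Hbe Es.
- move=> w ph Hph.
  have Hph' : is2cell (compM qs w) (zeroM x cs) (m1 s ⊙ ph - th ⊙ m0 w).
    split.
      by lin (eqD (eqD (eqN (Hth.1 |> m1 w)) (m1 s <| Hph.1)) (eqN (th <| mcomm w))).
    by lin (eqD (eqD (eqN (Hth.2 |> m0 w)) (m0 s <| Hph.2)) (eqN (mcomm s |> ph))).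
  have [v [be [Hvb Ev]]] := KKs3 w _ Hph'.
  exists v, be; split => //.
  have D1 : (ze ⊙ m0 v - m1 q ⊙ be - ph) ⊙ amap x = 0.
    by lin (eqD (eqD (eqN (ze <| mcomm v)) (eqN (Zc.1 |> m1 v))) (eqD (m1 q <| Hvb.1) Hph.1)).
  have D2 : amap c ⊙ (ze ⊙ m0 v - m1 q ⊙ be - ph) = 0.
    by lin (eqD (eqD (eqN (Zc.2 |> m0 v)) (eqN (mcomm q |> be))) (eqD (m0 q <| Hvb.2) Hph.2)).
  have D3 : m1 s ⊙ (ze ⊙ m0 v - m1 q ⊙ be - ph) = 0.
    by lin (eqD (eqD (Eth |> m0 v) (eqN (Hth.1 |> be))) (eqD Ev (th <| Hvb.2))).
  have D : ze ⊙ m0 v - m1 q ⊙ be - ph = 0.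
    by lin (eqD (eqD (m1 s' <| D3) (eqN (Hmu.1 |> (ze ⊙ m0 v - m1 q ⊙ be - ph)))) (eqN (mu <| D2))).
  by lin D.
Qed.


Section Puppe2.
Variables (a b : arr) (f : mor a b).
Hypotheses (Ia : inC a) (Ib : inC b).
Hypothesis Fc : cofaithfulM f.
Variables (Q : A) (q1 : hom Q (A0 a)) (q2 : hom Q (A1 b)).
Hypothesis PBQ : is_pullback (m0 f) (amap b) q1 q2.
Variables (P : A) (e : hom P Q).
Hypotheses (pP : projective P) (ee : epi e).
Variables (t : hom (A1 a) Q).
Hypotheses (ht1 : q1 ⊙ t = amap a) (ht2 : q2 ⊙ t = m1 f).
Variables (K1 : A) (r1 : hom K1 P) (r2 : hom K1 (A1 a)).
Hypothesis PBK : is_pullback e t r1 r2.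

Lemma puppe2_explicit : is_2cokernel (uM ht1 PBK) f (kap q2 e r1).
Proof.
have JE : forall T (y : hom (A0 b) T), y ⊙ m0 f = 0 -> y ⊙ amap b = 0 -> y = 0.
  exact: cofaithful_je Fc.
have CQ : m0 f ⊙ q1 = amap b ⊙ q2 by case: PBQ.
have CK : e ⊙ r1 = t ⊙ r2 by case: PBK.
split; first exact: (proj1 (ker_explicit PBQ ee ht1 ht2 PBK)).
move=> x Ix; split.
- move=> v v' ga ga' H1 H2 E; exact: (Fc Ix H1 H2 E).
- move=> v v' be [/= H1 H0] /= E.
  have E' : be ⊙ q1 = (m1 v - m1 v') ⊙ q2.
    apply: ee; by lin (eqN E).
  have [ga [g1 g2]] := pb_factor HA PBQ JE E'.
  exists ga; split => //; split => //=.
  apply: subr0_eq; apply: JE.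
    by lin (eqD H0 (eqN (amap x <| g1))).
  by lin (eqD (eqD (eqN (mcomm v)) (mcomm v')) (eqN (amap x <| g2))).
- move=> w ph [/= H1 H0].
  have [N [n kn]] := ab_ker HA e.
  have [z [z1 z2]] : exists z, r1 ⊙ z = n /\ r2 ⊙ z = 0.
    case: PBK => _ U _; apply: U; by rewrite (proj1 kn) compm0.
  have cn := epi_coker_ker HA ee kn.
  have [ph' ph'E] : exists ph', ph' ⊙ e = ph.
    apply: (coker_fact cn).
    by lin (eqD (eqD (eqN (ph <| z1)) (eqN (H1 |> z))) (m1 w <| z2)).
  have wq : m0 w ⊙ q1 = amap x ⊙ ph'.
    by apply: ee; lin (eqD H0 (eqN (amap x <| ph'E))).
  have wt : m1 w = ph' ⊙ t.
    apply: (pb_epi HA PBK ee); by lin (eqD (eqD H1 (eqN (ph'E |> r1))) (ph' <| CK)).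
  have [u' [v1 uvE]] := pb_split HA PBQ JE ph' Ib.
  have E3 : (m0 w - amap x ⊙ u') ⊙ q1 = (amap x ⊙ v1) ⊙ q2.
    by lin (eqD wq (eqN (amap x <| uvE))).
  have [v0 [v0f v0b]] := pb_factor HA PBQ JE E3.
  have vc : amap x ⊙ v1 = v0 ⊙ amap b by rewrite v0b.
  exists (@Mor _ b x _ _ vc), (- u'); split.
    split => /=.
      by lin (eqD (eqD (eqN wt) (uvE |> t)) (eqN (eqD (u' <| ht1) (v1 <| ht2)))).
    by lin v0f.
  by lin (eqD (uvE |> e) ph'E).
Qed.
End Puppe2.


Lemma puppe2_transfer (a b : arr) (f : mor a b) (Fc : cofaithfulM f)
  (ks : arr) (us : mor ks a) (kas : hom (A0 ks) (A1 b)) (Iks : inC ks)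
  (KKs : is_2kernel f us kas) (CKs : is_2cokernel us f kas)
  (k : arr) (u : mor k a) (ka : hom (A0 k) (A1 b)) (Ik : inC k)
  (KK : is_2kernel f u ka) : is_2cokernel u f ka.
Proof.
case: (KK) => Zk KKu; case: (KKs) => Zs KKsu.
have [_ _ KK3] := KKu ks Iks.
have [s [th [Hth Eth]]] := KK3 us kas Zs.
have [_ _ KKs3] := KKsu k Ik.
have [s' [th' [Hth' Eth']]] := KKs3 u ka Zk.
have [KK1 KK2 _] := KKu k Ik.
have Hcell : is2cell (compM u (compM s s')) (compM u (idM k)) (th ⊙ m0 s' + th').
  split.
    by lin (eqD (eqD (Hth.1 |> m1 s') Hth'.1) (th <| mcomm s')).
  by lin (eqD (Hth.2 |> m0 s') Hth'.2).
have Hcond : ka ⊙ m0 (compM s s') = m1 f ⊙ (th ⊙ m0 s' + th') + ka ⊙ m0 (idM k).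
  by lin (eqD (Eth |> m0 s') Eth').
have [mu [Hmu _]] := KK2 _ _ _ Hcell Hcond.
split => // x Ix; have [CKs1 CKs2 CKs3] := (proj2 CKs) x Ix; split.
- move=> v v' ga ga' H1 H2 E; exact: (Fc _ Ix _ _ _ _ H1 H2 E).
- move=> v v' be Hbe E.
  have Es : m1 v ⊙ kas = be ⊙ m0 us + m1 v' ⊙ kas.
    by lin (eqD (eqD (eqN (m1 v <| Eth)) (m1 v' <| Eth))
        (eqD (E |> m0 s) (eqD (eqN (Hbe.1 |> th)) (be <| Hth.2)))).
  exact: CKs2 Hbe Es.
- move=> w ph Hph.
  have Hph' : is2cell (compM w us) (zeroM ks x) (ph ⊙ m0 s - m1 w ⊙ th).
    split.
      by lin (eqD (eqD (eqN (m1 w <| Hth.1)) (Hph.1 |> m1 s)) (ph <| mcomm s)).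
    by lin (eqD (eqD (eqN (m0 w <| Hth.2)) (Hph.2 |> m0 s)) (mcomm w |> th)).
  have [v [be [Hvb Ev]]] := CKs3 w _ Hph'.
  exists v, be; split => //.
  have D1 : (m1 v ⊙ ka - be ⊙ m0 u - ph) ⊙ amap k = 0.
    by lin (eqD (eqD (eqN (m1 v <| Zk.1)) (Hvb.1 |> m1 u)) (eqD (be <| mcomm u) Hph.1)).
  have D2 : amap x ⊙ (m1 v ⊙ ka - be ⊙ m0 u - ph) = 0.
    by lin (eqD (eqD (mcomm v |> ka) (eqN (m0 v <| Zk.2))) (eqD (Hvb.2 |> m0 u) Hph.2)).
  have D3 : (m1 v ⊙ ka - be ⊙ m0 u - ph) ⊙ m0 s = 0.
    by lin (eqD (eqD (m1 v <| Eth) Ev) (eqD (eqN (be <| Hth.2)) (Hvb.1 |> th))).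
  have D : m1 v ⊙ ka - be ⊙ m0 u - ph = 0.
    by lin (eqD (eqD (D3 |> m0 s') (eqN ((m1 v ⊙ ka - be ⊙ m0 u - ph) <| Hmu.2)))
        (eqN (D1 |> mu))).
  by lin D.
Qed.


Lemma puppe3 (a b : arr) (f : mor a b) (Ia : inC a) (Ib : inC b) (FF : fully_faithfulM f)
  (c : arr) (ps : hom (A0 b) (A1 c)) (Ic : inC c) (CP : is_copip f ps) : is_root ps f.
Proof.
case: FF => Ff Fu.
case: CP => Zc cf CPu.
split; first exact: cf.
move=> x Ix; split.
- move=> v v' ga ga' H1 H2 E; exact: (Ff _ Ix _ _ _ _ H1 H2 E).
- move=> v v' be Hbe; exact: (Fu _ Ix _ _ _ Hbe).
move=> w pw.
have [Cq [cs [ecs csb csf UCs LCs]]] := jcoker (amap b) (m0 f).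
have CPs := copip_explicit ecs csb csf UCs.
have [_ _ CP3] := CPu (copA Cq) (@projective_zo A).
have [Zs _ _] := CPs.
have [v1' v1E] := CP3 cs Zs csf.
have cw : cs ⊙ m0 w = 0 by rewrite -v1E -compA pw compm0.
have [y1 [y0 yE]] := LCs _ _ Ix cw.
have [Q [q1 [q2 PBQ]]] := pb_ex HA (m0 f) (amap b).
case: (PBQ) => CQ UQ MQ.
have [t [ht1 ht2]] : exists t, q1 ⊙ t = amap a /\ q2 ⊙ t = m1 f.
  by apply: UQ; rewrite mcomm.
have mt : mono t.
  apply: mono_of0 => T s ts; apply: (faithful_jm Ff).
    by rewrite -ht1 -compA ts compm0.
  by rewrite -ht2 -compA ts compm0.
have et : epi t.
  have [P [e [pP ee]]] := cover Q.
  have vc : amap a ⊙ (0 : hom zo (A1 a)) = (q1 ⊙ e) ⊙ amap (tP P).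
    by rewrite /= !compm0.
  pose v := @Mor _ (tP P) a _ _ vc.
  have Hc : is2cell (compM f v) (compM f (zeroM (tP P) a)) (q2 ⊙ e).
    split => /=; first by rewrite !compm0 subrr.
    by rewrite compm0 subr0 !compA CQ.
  have [al [[_ H0] E]] := Fu (tP P) (@inC_tP P pP) _ _ _ Hc.
  have te : t ⊙ al = e.
    apply: MQ; rewrite compA ?ht1 ?ht2 ?E //.
    by move: H0 => /=; rewrite subr0.
  apply: epi_of0 => T g gt; apply: (epi0 ee); by rewrite -te compA gt comp0m.
have [ti [tit tti]] := mono_epi_iso HA mt et.
have Ez : m0 f ⊙ (y0 ⊙ amap x) = amap b ⊙ (m1 w - y1 ⊙ amap x).
  by lin (eqD (yE |> amap x) (eqN (mcomm w))).
have [z [z1 z2]] := UQ _ _ _ Ez.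
have vc : amap a ⊙ (ti ⊙ z) = y0 ⊙ amap x.
  by rewrite -ht1 -(compA q1) (compA t) tti comp1m z1.
exists (@Mor _ x a _ _ vc), (- y1); split => /=.
  have : q2 ⊙ t ⊙ ti ⊙ z = m1 w - y1 ⊙ amap x.
    by rewrite -(compA q2) tti compm1 z2.
  rewrite ht2 => H; by lin H.
by lin yE.
Qed.

Lemma puppe4 (a b : arr) (f : mor a b) (Ia : inC a) (Ib : inC b) (FF : fully_cofaithfulM f)
  (p : arr) (pi : hom (A0 p) (A1 a)) (Ip : inC p) (PP : is_pip f pi) : is_coroot pi f.
Proof.
case: FF => Ff Fu.
case: PP => Zp fp PPu.
split; first exact: fp.
move=> x Ix; split.
- move=> v v' ga ga' H1 H2 E; exact: (Ff _ Ix _ _ _ _ H1 H2 E).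
- move=> v v' be Hbe; exact: (Fu _ Ix _ _ _ Hbe).
move=> w wp.
have [K [kK [mK aK fK UK]]] := jker (amap a) (m1 f).
have [P [e [pP ee]]] := cover K.
have [P1 [pk kpk]] := ab_ker HA e.
have PPs := pip_explicit mK aK fK UK ee kpk.
have [_ _ PP3] := PPu (pipA pk) pP.
have [Zs fs _] := PPs.
have [v0' v0E] := PP3 _ Zs fs.
have wK : m1 w ⊙ kK = 0.
  apply: (epi0 ee); rewrite -compA.
  by move: v0E; rewrite /pip_pi => <-; rewrite compA wp comp0m.
have [C1 [inc1 [inc2 PO]]] := po_ex HA (amap a) (m1 f).
case: (PO) => CP UP MP.
have [al [alf alb]] : exists al : hom (A0 b) C1, al ⊙ m0 f = inc1 /\ al ⊙ amap b = inc2.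
  have vc : amap (tT C1) ⊙ inc2 = (0 : hom (A0 b) zo) ⊙ amap b by apply: zo_hom1.
  pose v := @Mor _ b (tT C1) _ _ vc.
  have Hc : is2cell (compM v f) (compM (zeroM b (tT C1)) f) inc1.
    split => /=; first by rewrite comp0m subr0.
    by apply: zo_hom1.
  have [al [[H1 _] E]] := Fu _ (@inC_tT C1) _ _ _ Hc.
  exists al; split => //.
  by move: H1 => /=; rewrite subr0.
have [cc [hc1 hc2]] : exists cc, cc ⊙ inc1 = m0 f /\ cc ⊙ inc2 = amap b.
  by apply: UP; rewrite mcomm.
have alcc : al ⊙ cc = idm C1.
  by apply: MP; rewrite -compA ?hc1 ?hc2 comp1m.
have pC1 : projective C1.
  move=> X Y e' ee' g.
  have [h hE] := Ib _ _ _ ee' (g ⊙ al).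
  by exists (h ⊙ cc); rewrite compA hE -compA alcc compm1.
have Hw : forall S (t : hom S (A1 a)), amap a ⊙ t = 0 -> m1 f ⊙ t = 0 -> m1 w ⊙ t = 0.
  move=> S t at0 ft0; have [t' t'E] := UK _ _ at0 ft0.
  by rewrite -t'E compA wK comp0m.
have [u [v uvE]] := po_split HA PO pC1 Hw.
have EG : (m0 w - amap x ⊙ u) ⊙ amap a = (amap x ⊙ v) ⊙ m1 f.
  by lin (eqD (eqN (mcomm w)) (eqN (amap x <| uvE))).
have [G [G1 G2]] := UP _ _ _ EG.
have vc : amap x ⊙ v = (G ⊙ al) ⊙ amap b by rewrite -compA alb G2.
exists (@Mor _ b x _ _ vc), (- u); split => /=.
  by lin uvE.
by rewrite -compA alf G1; csolve.
Qed.


Lemma puppe : two_Puppe_exact A.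
Proof.
split.
- move=> a b f Ia Ib Ff c q ze Ic CK.
  have [C1 [inc1 [inc2 PO]]] := po_ex HA (amap a) (m1 f).
  have [cc [hc1 hc2]] : exists cc, cc ⊙ inc1 = m0 f /\ cc ⊙ inc2 = amap b.
    by case: PO => _ U _; apply: U; rewrite mcomm.
  have JM := faithful_jm Ff.
  exact: (puppe1_transfer Ff (cs := cA cc) Ib (coker_explicit PO hc1 hc2)
           (puppe1_explicit JM Ff PO hc1 hc2) Ic CK).
- move=> a b f Ia Ib Fc k u ka Ik KK.
  have [Q [q1 [q2 PBQ]]] := pb_ex HA (m0 f) (amap b).
  have [P [e [pP ee]]] := cover Q.
  have [t [ht1 ht2]] : exists t, q1 ⊙ t = amap a /\ q2 ⊙ t = m1 f.
    by case: PBQ => _ U _; apply: U; rewrite mcomm.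
  have [K1 [r1 [r2 PBK]]] := pb_ex HA e t.
  exact: (puppe2_transfer Fc (ks := kA r1) pP (ker_explicit PBQ ee ht1 ht2 PBK)
           (puppe2_explicit Ib Fc PBQ ee ht1 ht2 PBK) Ik KK).
- move=> a b f Ia Ib FF c ps Ic CP; exact: (@puppe3 a b f Ia Ib FF c ps Ic CP).
- move=> a b f Ia Ib FF p pi Ip PP; exact: (@puppe4 a b f Ia Ib FF p pi Ip PP).
Qed.

Lemma main : [/\ two_abelian A, discrete_coker_equivalence A & codiscrete_ker_equivalence A].
Proof.
split; [split | exact: disc_part | exact: codisc_part].
- exact: additive2.
- split; [exact: has_kernels | exact: has_cokernels].
- split; [exact: has_pips_ | exact: has_copips_].
- split; [exact: has_roots_ | exact: has_coroots_].
- exact: puppe.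
Qed.

End Two.

Theorem theorem3p1 (A : PreAdditive) :
  abelian A -> enough_projectives A ->
  [/\ two_abelian A, discrete_coker_equivalence A & codiscrete_ker_equivalence A].
Proof. move=> HA HP; exact: main HA HP. Qed.
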